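(* Let $u_0,\theta_0,\psi_0\in\mathbb R$ satisfy $a_ju_0+1>0$ for $j=1,\ldots,m$, and suppose $A:=Q(u_0)^{1/2}\sin\theta_0\in(0,1)$. Then there exist unique solutions $u(t),\theta(t),\psi(t)$, defined for all $t\in\mathbb R$, of \[\frac{du}{dt}=2Q(u)^{1/2}\cos\theta,\] \[\frac{d\theta}{dt}=-Q(u)^{1/2}\sin\theta\sum_{j=1}^m\frac{a_j}{a_ju+1},\] \[\frac{d\psi}{dt}=-Q(u)^{1/2}\sin\theta\sum_{j=1}^m\frac{a_j^2}{a_ju+1},\] with $u(0)=u_0$, $\theta(0)=\theta_0$ and $\psi(0)=\psi_0$. Moreover, $u$ and $\theta$ are nonconstant and periodic with some period $T>0$, and there exists $\Psi>0$ with $\psi(t+T)=\psi(t)-\Psi$ for all $t\in\mathbb R$.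
   Context: Standing assumptions: $m\ge3$, and $a_1\le\cdots\le a_m$ are integers, not all zero, with highest common factor $1$ and $a_1+\cdots+a_m=0$. $Q(u)=\prod_{j=1}^m(a_ju+1)$. *)

(* Defs.v *)
From Stdlib Require Import Reals ZArith List.
From Coquelicot Require Import Coquelicot.
Import ListNotations.
Open Scope R_scope.

(* The integers a_1 <= ... <= a_m are encoded (0-based) as a 0, ..., a (m-1). *)

Definition hcf (a : nat -> Z) (m : nat) : Z :=
  fold_right Z.gcd 0%Z (map a (seq 0 m)).

Definition standing (a : nat -> Z) (m : nat) : Prop :=
  (3 <= m)%nat /\
  (forall i j, (i <= j)%nat -> (j < m)%nat -> (a i <= a j)%Z) /\
  (exists j, (j < m)%nat /\ a j <> 0%Z) /\
  hcf a m = 1%Z /\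
  fold_right Z.add 0%Z (map a (seq 0 m)) = 0%Z.

Definition Q (a : nat -> Z) (m : nat) (u : R) : R :=
  fold_right Rmult 1 (map (fun j => IZR (a j) * u + 1) (seq 0 m)).

Definition S (k : nat) (a : nat -> Z) (m : nat) (u : R) : R :=
  fold_right Rplus 0 (map (fun j => IZR (a j) ^ k / (IZR (a j) * u + 1)) (seq 0 m)).

Definition solves (a : nat -> Z) (m : nat) (u th ps : R -> R) : Prop :=
  forall t : R,
    is_derive u t (2 * sqrt (Q a m (u t)) * cos (th t)) /\
    is_derive th t (- sqrt (Q a m (u t)) * sin (th t) * S 1 a m (u t)) /\
    is_derive ps t (- sqrt (Q a m (u t)) * sin (th t) * S 2 a m (u t)).

(* Main.v *)
Require Import Defs.
From Stdlib Require Import Reals ZArith List.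
From Coquelicot Require Import Coquelicot.
From Stdlib Require Import Lra Lia Ranalysis5 FunctionalExtensionality.
From Stdlib Require Import ClassicalEpsilon Classical.
Open Scope R_scope.

Lemma deriv_cont (f : R -> R) (x l : R) : is_derive f x l -> continuity_pt f x.
Proof. intro H. apply continuity_pt_filterlim. exact (ex_derive_continuous f x (ex_intro _ l H)). Qed.

Lemma deriv_continuous (f : R -> R) (x l : R) : is_derive f x l -> continuous f x.
Proof. intro H. exact (ex_derive_continuous f x (ex_intro _ l H)). Qed.

Lemma mvt_closed (f fd : R -> R) (x z : R) : x < z ->
  (forall s, x <= s <= z -> is_derive f s (fd s)) ->
  exists c, x <= c <= z /\ f z - f x = fd c * (z - x).
Proof.
  intros Hxz H.
  destruct (MVT_gen f x z fd) as [c [Hc E]].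
  - intros s Hs. rewrite Rmin_left in Hs by lra. rewrite Rmax_right in Hs by lra.
    apply H; lra.
  - intros s Hs. rewrite Rmin_left in Hs by lra. rewrite Rmax_right in Hs by lra.
    apply (deriv_cont _ _ (fd s)), H; lra.
  - rewrite Rmin_left in Hc by lra. rewrite Rmax_right in Hc by lra.
    exists c; split; auto.
Qed.

Lemma incr_strict (f fd : R -> R) (a b : R) :
  (forall x, a <= x <= b -> is_derive f x (fd x) /\ 0 < fd x) ->
  forall x z, a <= x -> x < z -> z <= b -> f x < f z.
Proof.
  intros H x z H1 H2 H3.
  destruct (mvt_closed f fd x z H2) as [c [Hc E]].
  - intros s Hs; apply H; lra.
  - assert (0 < fd c) by (apply H; lra). nra.
Qed.

Lemma decr_interval (f fd : R -> R) (x z : R) : x <= z ->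
  (forall s, x <= s <= z -> is_derive f s (fd s) /\ fd s <= 0) -> f z <= f x.
Proof.
  intros Hxz H. destruct (Req_dec x z) as [->|Hne]; [lra|].
  destruct (mvt_closed f fd x z) as [c [Hc E]]; [lra| intros s Hs; apply H; lra |].
  assert (fd c <= 0) by (apply H; lra). nra.
Qed.

Lemma const_interval (f : R -> R) (x z : R) : x <= z ->
  (forall s, x <= s <= z -> is_derive f s 0) -> f x = f z.
Proof.
  intros Hxz H. destruct (Req_dec x z) as [->|Hne]; [lra|].
  destruct (mvt_closed f (fun _ => 0) x z) as [c [Hc E]]; [lra| intros s Hs; apply H; lra |].
  lra.
Qed.

Lemma const_global (f : R -> R) : (forall s, is_derive f s 0) -> forall x z, f x = f z.
Proof.
  intros H x z. destruct (Rle_dec x z).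
  - apply const_interval; auto.
  - symmetry; apply const_interval; auto; lra.
Qed.

Lemma cont_ind (P : R -> Prop) :
  (forall t, 0 <= t -> (forall s, 0 <= s < t -> P s) -> P t) ->
  (forall t, 0 <= t -> P t -> exists d, 0 < d /\ forall s, t <= s < t + d -> P s) ->
  forall t, 0 <= t -> P t.
Proof.
  intros Hcl Hop t1 Ht1. apply NNPP; intro Hn.
  set (E := fun x => 0 <= x <= t1 /\ forall s, 0 <= s < x -> P s).
  destruct (completeness E) as [m [Hub Hlub]].
  - exists t1. intros x [Hx _]. lra.
  - exists 0. split; [lra|]. intros s Hs; lra.
  - assert (Hm0 : 0 <= m) by (apply Hub; split; [lra| intros; lra]).
    assert (Hmt : m <= t1) by (apply Hlub; intros x [Hx _]; lra).
    assert (Hb : forall s, 0 <= s < m -> P s).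
    { intros s Hs. apply NNPP; intro Hns.
      assert (m <= s); [|lra]. apply Hlub. intros x [Hx Hx2].
      destruct (Rle_dec x s); auto. exfalso; apply Hns, Hx2; lra. }
    assert (Pm : P m) by (apply Hcl; auto).
    destruct (Req_dec m t1) as [->|Hne]; [contradiction|].
    destruct (Hop m Hm0 Pm) as [d [Hd Hd2]].
    assert (Rmin (m + d) t1 <= m).
    { apply Hub. split. split; [apply Rmin_glb; lra| apply Rmin_r].
      intros s Hs. destruct (Rlt_dec s m). apply Hb; lra.
      apply Hd2. split; [lra|]. apply Rlt_le_trans with (1 := proj2 Hs). apply Rmin_l. }
    assert (Rmin (m+d) t1 > m); [|lra].
    unfold Rmin; destruct Rle_dec; lra.
Qed.

Lemma incr_le (f fd : R -> R) (a b : R) :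
  (forall x, a <= x <= b -> is_derive f x (fd x) /\ 0 < fd x) ->
  forall x z, a <= x -> x <= z -> z <= b -> f x <= f z.
Proof.
  intros H x z H1 H2 H3. destruct (Req_dec x z) as [->|]; [lra|].
  left; apply (incr_strict f fd a b); auto; lra.
Qed.

Lemma inv_deriv_core (f fd h : R -> R) (a b y0 : R) : a < b ->
  (forall x, a <= x <= b -> is_derive f x (fd x) /\ 0 < fd x) ->
  (forall y, f a < y < f b -> a < h y < b /\ f (h y) = y) ->
  f a < y0 < f b -> is_derive h y0 (1 / fd (h y0)).
Proof.
  intros Hab Hd Hh Hy0.
  assert (Hs := incr_strict f fd a b Hd).
  assert (Hl := incr_le f fd a b Hd).
  assert (Hmon : forall y1 y2, f a < y1 < f b -> f a < y2 < f b -> y1 < y2 -> h y1 < h y2).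
  { intros y1 y2 H1 H2 H12. destruct (Hh _ H1) as [R1 E1]. destruct (Hh _ H2) as [R2 E2].
    destruct (Rlt_dec (h y1) (h y2)) as [|Hn]; auto.
    assert (f (h y2) <= f (h y1)) by (apply Hl; lra). lra. }
  assert (Hc : continuity_pt h y0).
  { intros eps Heps. destruct (Hh _ Hy0) as [R0 E0].
    set (x0 := h y0) in *.
    set (e := Rmin eps (Rmin (x0 - a) (b - x0)) / 2).
    assert (He1 : 0 < e).
    { unfold e. apply Rmult_lt_0_compat; [|lra].
      repeat apply Rmin_glb_lt; lra. }
    assert (He2 : e < eps) by (unfold e; assert (Rmin eps (Rmin (x0 - a) (b - x0)) <= eps) by apply Rmin_l; lra).
    assert (He3 : e < x0 - a).
    { unfold e. assert (Rmin eps (Rmin (x0 - a) (b - x0)) <= x0 - a); [|lra].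
      eapply Rle_trans; [apply Rmin_r| apply Rmin_l]. }
    assert (He4 : e < b - x0).
    { unfold e. assert (Rmin eps (Rmin (x0 - a) (b - x0)) <= b - x0); [|lra].
      eapply Rle_trans; [apply Rmin_r| apply Rmin_r]. }
    assert (F1 : f (x0 - e) < y0) by (rewrite <- E0; apply Hs; lra).
    assert (F2 : y0 < f (x0 + e)) by (rewrite <- E0 at 1; apply Hs; lra).
    assert (F3 : f a < f (x0 - e)) by (apply Hs; lra).
    assert (F4 : f (x0 + e) < f b) by (apply Hs; lra).
    exists (Rmin (y0 - f (x0 - e)) (f (x0 + e) - y0)). split.
    { apply Rmin_glb_lt; lra. }
    intros y [_ Hy]. unfold R_dist in *.
    assert (Hy1 : y0 - f (x0 - e) > Rabs (y - y0)) by (eapply Rlt_le_trans; [apply Hy| apply Rmin_l]).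
    assert (Hy2 : f (x0 + e) - y0 > Rabs (y - y0)) by (eapply Rlt_le_trans; [apply Hy| apply Rmin_r]).
    assert (Ha1 := Rle_abs (y - y0)). assert (Ha2 := Rle_abs (-(y - y0))). rewrite Rabs_Ropp in Ha2.
    assert (Hyr : f a < y < f b) by lra.
    destruct (Hh _ Hyr) as [Ry Ey].
    assert (h y > x0 - e).
    { destruct (Rlt_dec (x0 - e) (h y)); auto. assert (f (h y) <= f (x0 - e)) by (apply Hl; lra). lra. }
    assert (h y < x0 + e).
    { destruct (Rlt_dec (h y) (x0 + e)); auto. assert (f (x0 + e) <= f (h y)) by (apply Hl; lra). lra. }
    apply Rabs_def1; lra. }
  set (lb := (f a + y0) / 2). set (ub := (y0 + f b) / 2).
  assert (Hlb : f a < lb < y0) by (unfold lb; lra).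
  assert (Hub : y0 < ub < f b) by (unfold ub; lra).
  assert (Prf : forall x, h lb <= x <= h ub -> derivable_pt f x).
  { intros x Hx. destruct (Hh lb) as [Rl _]; [lra|]. destruct (Hh ub) as [Ru _]; [lra|].
    exists (fd x). apply is_derive_Reals. apply Hd; lra. }
  assert (Pin : h lb <= h y0 <= h ub).
  { split; left; apply Hmon; lra. }
  assert (Hcomp : forall x, lb <= x <= ub -> comp f h x = id x).
  { intros x Hx. unfold comp, id. apply Hh. lra. }
  assert (Hder : derive_pt f (h y0) (Prf (h y0) Pin) = fd (h y0)).
  { apply derive_pt_eq_0. apply is_derive_Reals. destruct (Hh _ Hy0). apply Hd; lra. }
  assert (Hnz : derive_pt f (h y0) (Prf (h y0) Pin) <> 0).
  { rewrite Hder. destruct (Hh _ Hy0). assert (0 < fd (h y0)) by (apply Hd; lra). lra. }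
  assert (X := derivable_pt_lim_recip_interv f h lb ub y0 Prf Hc ltac:(lra) ltac:(lra) Pin Hcomp Hnz).
  rewrite Hder in X. apply is_derive_Reals. exact X.
Qed.

Lemma d_plus (f g : R -> R) (x df dg : R) : is_derive f x df -> is_derive g x dg ->
  is_derive (fun t => f t + g t) x (df + dg).
Proof. intros. exact (is_derive_plus f g x df dg H H0). Qed.
Lemma d_mult (f g : R -> R) (x df dg : R) : is_derive f x df -> is_derive g x dg ->
  is_derive (fun t => f t * g t) x (df * g x + f x * dg).
Proof. intros. exact (is_derive_mult f g x df dg H H0 Rmult_comm). Qed.
Lemma d_const (c x : R) : is_derive (fun _ => c) x 0.
Proof. exact (is_derive_const c x). Qed.
Lemma d_id (x : R) : is_derive (fun t => t) x 1.
Proof. exact (is_derive_id x). Qed.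
Lemma d_eq (f : R -> R) (x l l' : R) : is_derive f x l -> l = l' -> is_derive f x l'.
Proof. intros H ->; exact H. Qed.
Lemma d_ext (f g : R -> R) (x l : R) : (forall t, f t = g t) -> is_derive f x l -> is_derive g x l.
Proof. intros E H. replace g with f; auto. apply functional_extensionality; auto. Qed.
Lemma d_comp (f g : R -> R) (x df dg : R) : is_derive f (g x) df -> is_derive g x dg ->
  is_derive (fun t => f (g t)) x (dg * df).
Proof. intros. exact (is_derive_comp f g x df dg H H0). Qed.

Inductive poly : (R -> R) -> Prop :=
| poly_const c : poly (fun _ => c)
| poly_id : poly (fun x => x)
| poly_add f g : poly f -> poly g -> poly (fun x => f x + g x)
| poly_mul f g : poly f -> poly g -> poly (fun x => f x * g x).

Lemma poly_ext f g : poly f -> (forall x, f x = g x) -> poly g.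
Proof. intros H E. replace g with f; auto. apply functional_extensionality; auto. Qed.

Lemma poly_deriv f : poly f -> exists f', poly f' /\ forall x, is_derive f x (f' x).
Proof.
  induction 1.
  - exists (fun _ => 0). split; [constructor|]. intros; apply d_const.
  - exists (fun _ => 1). split; [constructor|]. intros; apply d_id.
  - destruct IHpoly1 as [f' [P1 D1]]. destruct IHpoly2 as [g' [P2 D2]].
    exists (fun x => f' x + g' x). split; [constructor; auto|]. intros; apply d_plus; auto.
  - destruct IHpoly1 as [f' [P1 D1]]. destruct IHpoly2 as [g' [P2 D2]].
    exists (fun x => f' x * g x + f x * g' x). split; [repeat constructor; auto|].
    intros; apply d_mult; auto.
Qed.

Lemma poly_cont f x : poly f -> continuity_pt f x.
Proof. intro H. destruct (poly_deriv f H) as [f' [_ D]]. apply (deriv_cont f x (f' x)), D. Qed.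

Lemma poly_continuous f x : poly f -> continuous f x.
Proof. intro H. destruct (poly_deriv f H) as [f' [_ D]]. apply (deriv_continuous f x (f' x)), D. Qed.

Lemma poly_div f c : poly f -> exists q, poly q /\ forall x, f x = f c + (x - c) * q x.
Proof.
  induction 1.
  - exists (fun _ => 0). split; [constructor|]. intros; ring.
  - exists (fun _ => 1). split; [constructor|]. intros; ring.
  - destruct IHpoly1 as [q1 [P1 E1]]. destruct IHpoly2 as [q2 [P2 E2]].
    exists (fun x => q1 x + q2 x). split; [constructor; auto|]. intros x.
    rewrite (E1 x), (E2 x). ring.
  - destruct IHpoly1 as [q1 [P1 E1]]. destruct IHpoly2 as [q2 [P2 E2]].
    exists (fun x => q1 x * g x + f c * q2 x). split; [repeat constructor; auto|]. intros x.
    rewrite (E1 x) at 1. rewrite (E2 x) at 1. rewrite (E2 x). ring.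
Qed.

Definition QL (a : nat -> Z) (L : list nat) (u : R) : R :=
  fold_right Rmult 1 (map (fun j => IZR (a j) * u + 1) L).
Definition SL (k : nat) (a : nat -> Z) (L : list nat) (u : R) : R :=
  fold_right Rplus 0 (map (fun j => IZR (a j) ^ k / (IZR (a j) * u + 1)) L).
Definition SdL (a : nat -> Z) (L : list nat) (u : R) : R :=
  fold_right Rplus 0 (map (fun j => IZR (a j) ^ 2 / (IZR (a j) * u + 1) ^ 2) L).

Lemma QL_poly a L : poly (QL a L).
Proof.
  induction L as [|j L IH]; unfold QL; simpl.
  - apply poly_const.
  - apply (poly_mul (fun u => IZR (a j) * u + 1)); [|exact IH].
    apply poly_add; [apply poly_mul; constructor| constructor].
Qed.

Definition DL (a : nat -> Z) (L : list nat) (u : R) : Prop :=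
  forall j, In j L -> IZR (a j) * u + 1 > 0.

Lemma QL_pos a L u : DL a L u -> QL a L u > 0.
Proof.
  induction L as [|j L IH]; intros H; unfold QL; simpl. lra.
  apply Rmult_lt_0_compat. apply H; simpl; auto. apply IH. intros i Hi; apply H; simpl; auto.
Qed.

Lemma QL_deriv a L u : DL a L u -> is_derive (QL a L) u (QL a L u * SL 1 a L u).
Proof.
  induction L as [|j L IH]; intros H; unfold QL, SL; simpl.
  - eapply d_eq; [apply d_const| ring].
  - assert (Hj : IZR (a j) * u + 1 > 0) by (apply H; simpl; auto).
    assert (IH' := IH (fun i Hi => H i (or_intror Hi))).
    unfold QL, SL in IH'.
    eapply d_eq.
    + apply (d_mult (fun u => IZR (a j) * u + 1)); [|exact IH'].
      apply (d_eq _ _ (IZR (a j) * 1 + 0)); [apply d_plus; [apply (is_derive_scal (fun t => t)); apply d_id| apply d_const]| reflexivity].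
    + cbv beta; simpl; field; lra.
Qed.

Lemma sum_nonneg (g : nat -> R) L : (forall j, In j L -> 0 <= g j) -> 0 <= fold_right Rplus 0 (map g L).
Proof.
  induction L as [|j L IH]; intros H; cbn [fold_right map]; [lra|].
  assert (0 <= g j) by (apply H; simpl; auto).
  assert (0 <= fold_right Rplus 0 (map g L)) by (apply IH; intros; apply H; simpl; auto). lra.
Qed.

Lemma sum_pos (g : nat -> R) L : (forall j, In j L -> 0 <= g j) -> (exists j, In j L /\ 0 < g j) ->
  0 < fold_right Rplus 0 (map g L).
Proof.
  induction L as [|j L IH]; intros H [i [Hi Hg]]; [destruct Hi|]. cbn [fold_right map].
  destruct Hi as [<-|Hi].
  - assert (0 <= fold_right Rplus 0 (map g L)) by (apply sum_nonneg; intros; apply H; simpl; auto). lra.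
  - assert (0 <= g j) by (apply H; simpl; auto).
    assert (0 < fold_right Rplus 0 (map g L)); [|lra].
    apply IH; [intros; apply H; simpl; auto| exists i; auto].
Qed.

Lemma SdL_pos a L u : DL a L u -> (exists j, In j L /\ a j <> 0%Z) -> SdL a L u > 0.
Proof.
  intros H [i [Hi Hai]]. apply sum_pos.
  - intros j Hj. assert (IZR (a j) * u + 1 > 0) by auto.
    apply Rmult_le_pos; [nra|]. left; apply Rinv_0_lt_compat; nra.
  - exists i. split; auto. assert (IZR (a i) * u + 1 > 0) by auto.
    assert (IZR (a i) <> 0) by (apply not_0_IZR; auto).
    apply Rdiv_lt_0_compat; nra.
Qed.

Lemma SL1_deriv a L u : DL a L u -> is_derive (SL 1 a L) u (- SdL a L u).
Proof.
  induction L as [|j L IH]; intros H; unfold SL, SdL; simpl.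
  - eapply d_eq; [apply d_const| ring].
  - assert (Hj : IZR (a j) * u + 1 > 0) by (apply H; simpl; auto).
    assert (IH' := IH (fun i Hi => H i (or_intror Hi))).
    unfold SL, SdL in IH'.
    eapply d_eq.
    + apply (d_plus (fun u => IZR (a j) ^ 1 / (IZR (a j) * u + 1))); [|exact IH'].
      apply is_derive_div; [apply d_const| |lra].
      apply (d_eq _ _ (IZR (a j) * 1 + 0)); [apply d_plus; [apply (is_derive_scal (fun t => t)); apply d_id| apply d_const]| reflexivity].
    + cbv beta; simpl; field; lra.
Qed.

Lemma SL_deriv k a L u : DL a L u -> exists d, is_derive (SL k a L) u d.
Proof.
  induction L as [|j L IH]; intros H; unfold SL; simpl.
  - exists 0. apply d_const.
  - assert (Hj : IZR (a j) * u + 1 > 0) by (apply H; simpl; auto).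
    destruct (IH (fun i Hi => H i (or_intror Hi))) as [d D].
    unfold SL in D.
    eexists.
    apply (d_plus (fun u => IZR (a j) ^ k / (IZR (a j) * u + 1))); [|exact D].
    apply is_derive_div; [apply d_const| |lra].
    apply (d_eq _ _ (IZR (a j) * 1 + 0)); [apply d_plus; [apply (is_derive_scal (fun t => t)); apply d_id| apply d_const]| reflexivity].
Qed.

Lemma SL2_pos a L u : DL a L u -> (exists j, In j L /\ a j <> 0%Z) -> SL 2 a L u > 0.
Proof.
  intros H [i [Hi Hai]]. apply sum_pos.
  - intros j Hj. assert (IZR (a j) * u + 1 > 0) by auto.
    apply Rmult_le_pos; [nra|]. left; apply Rinv_0_lt_compat; nra.
  - exists i. split; auto. assert (IZR (a i) * u + 1 > 0) by auto.
    assert (IZR (a i) <> 0) by (apply not_0_IZR; auto).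
    apply Rdiv_lt_0_compat; nra.
Qed.

Lemma DL_convex a L x y z : DL a L x -> DL a L z -> x <= y <= z -> DL a L y.
Proof.
  intros Hx Hz Hy j Hj. assert (A1 := Hx j Hj). assert (A2 := Hz j Hj).
  destruct (Rle_dec 0 (IZR (a j))); nra.
Qed.

Lemma QL_zero a L j z : In j L -> IZR (a j) * z + 1 = 0 -> QL a L z = 0.
Proof.
  induction L as [|i L IH]; intros Hj Hz; [destruct Hj|]. unfold QL; cbn [fold_right map].
  destruct Hj as [<-|Hj]. rewrite Hz; ring.
  unfold QL in IH. rewrite IH; auto; ring.
Qed.

Lemma max_in (g : nat -> R) (P : nat -> Prop) (Pd : forall j, {P j} + {~ P j}) L :
  (exists j, In j L /\ P j) -> exists k, In k L /\ P k /\ forall j, In j L -> P j -> g j <= g k.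
Proof.
  induction L as [|i L IH]; intros [j [Hj Pj]]; [destruct Hj|].
  destruct (classic (exists j, In j L /\ P j)) as [Ex|NEx].
  - destruct (IH Ex) as [k [Hk [Pk Hm]]].
    destruct (Pd i) as [Pi|NPi].
    + destruct (Rle_dec (g i) (g k)).
      * exists k. split; [simpl; auto|]. split; auto. intros l [<-|Hl] Pl; auto.
      * exists i. split; [simpl; auto|]. split; auto. intros l [<-|Hl] Pl; [lra|].
        assert (g l <= g k) by auto. lra.
    + exists k. split; [simpl; auto|]. split; auto. intros l [<-|Hl] Pl; [contradiction|auto].
  - destruct Hj as [<-|Hj]; [|exfalso; apply NEx; exists j; auto].
    exists i. split; [simpl; auto|]. split; auto. intros l [<-|Hl] Pl; [lra|].
    exfalso; apply NEx; exists l; auto.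
Qed.

Lemma left_point a L y0 e : 0 < e -> DL a L y0 -> (exists j, In j L /\ (a j > 0)%Z) ->
  exists p, p < y0 /\ DL a L p /\ QL a L p < e.
Proof.
  intros He Hy0 Ex.
  destruct (max_in (fun j => - / IZR (a j)) (fun j => (a j > 0)%Z) (fun j => Z_gt_dec (a j) 0) L Ex)
    as [k [Hk [Pk Hm]]].
  set (z := - / IZR (a k)).
  assert (Hak : IZR (a k) > 0) by (apply IZR_lt; lia).
  assert (Qz : QL a L z = 0).
  { apply (QL_zero a L k z Hk). unfold z. field. lra. }
  assert (Hzy : z < y0).
  { assert (A1 := Hy0 k Hk). unfold z.
    assert (IZR (a k) * (- / IZR (a k)) = -1) by (field; lra). nra. }
  assert (HD : forall x, z < x <= y0 -> DL a L x).
  { intros x Hx j Hj. destruct (Z_gt_dec (a j) 0) as [Pj|NPj].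
    - assert (Hj' := Hm j Hj Pj). assert (Haj : IZR (a j) > 0) by (apply IZR_lt; lia).
      assert (IZR (a j) * (- / IZR (a j)) = -1) by (field; lra).
      cbv beta in Hj'. fold z in Hj'. nra.
    - assert (Haj : IZR (a j) <= 0) by (apply IZR_le; lia).
      assert (A1 := Hy0 j Hj). nra. }
  assert (Hc := poly_cont (QL a L) z (QL_poly a L)).
  destruct (Hc e He) as [d [Hd Hd2]].
  set (p := z + Rmin d (y0 - z) / 2).
  assert (Hmin1 : Rmin d (y0 - z) <= d) by apply Rmin_l.
  assert (Hmin2 : Rmin d (y0 - z) <= y0 - z) by apply Rmin_r.
  assert (Hmin3 : 0 < Rmin d (y0 - z)) by (apply Rmin_glb_lt; lra).
  exists p. split; [unfold p; lra|]. split; [apply HD; unfold p; lra|].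
  assert (R_dist (QL a L p) (QL a L z) < e).
  { apply Hd2. split. split. constructor. unfold p; lra. simpl. unfold R_dist, p. rewrite Rabs_pos_eq; lra. }
  unfold R_dist in H. rewrite Qz in H. rewrite Rminus_0_r in H.
  assert (H' := Rle_abs (QL a L p)). lra.
Qed.

Lemma right_point a L y0 e : 0 < e -> DL a L y0 -> (exists j, In j L /\ (a j < 0)%Z) ->
  exists q, y0 < q /\ DL a L q /\ QL a L q < e.
Proof.
  intros He Hy0 Ex.
  destruct (max_in (fun j => / IZR (a j)) (fun j => (a j < 0)%Z) (fun j => Z_lt_dec (a j) 0) L Ex)
    as [k [Hk [Pk Hm]]].
  set (z := - / IZR (a k)).
  assert (Hak : IZR (a k) < 0) by (apply IZR_lt; lia).
  assert (Qz : QL a L z = 0).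
  { apply (QL_zero a L k z Hk). unfold z. field. lra. }
  assert (Hzy : y0 < z).
  { assert (A1 := Hy0 k Hk). unfold z.
    assert (IZR (a k) * (- / IZR (a k)) = -1) by (field; lra). nra. }
  assert (HD : forall x, y0 <= x < z -> DL a L x).
  { intros x Hx j Hj. destruct (Z_lt_dec (a j) 0) as [Pj|NPj].
    - assert (Hj' := Hm j Hj Pj). assert (Haj : IZR (a j) < 0) by (apply IZR_lt; lia).
      assert (IZR (a j) * (- / IZR (a j)) = -1) by (field; lra).
      cbv beta in Hj'. assert (- / IZR (a j) >= z) by (unfold z; lra). nra.
    - assert (Haj : IZR (a j) >= 0) by (apply Rle_ge, IZR_le; lia).
      assert (A1 := Hy0 j Hj). nra. }
  assert (Hc := poly_cont (QL a L) z (QL_poly a L)).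
  destruct (Hc e He) as [d [Hd Hd2]].
  set (p := z - Rmin d (z - y0) / 2).
  assert (Hmin1 : Rmin d (z - y0) <= d) by apply Rmin_l.
  assert (Hmin2 : Rmin d (z - y0) <= z - y0) by apply Rmin_r.
  assert (Hmin3 : 0 < Rmin d (z - y0)) by (apply Rmin_glb_lt; lra).
  exists p. split; [unfold p; lra|]. split; [apply HD; unfold p; lra|].
  assert (R_dist (QL a L p) (QL a L z) < e).
  { apply Hd2. split. split. constructor. unfold p; lra. simpl. unfold R_dist, p. rewrite Rabs_left; lra. }
  unfold R_dist in H. rewrite Qz in H. rewrite Rminus_0_r in H.
  assert (H' := Rle_abs (QL a L p)). lra.
Qed.

Lemma sign_exists (a : nat -> Z) L :
  fold_right Z.add 0%Z (map a L) = 0%Z -> (exists j, In j L /\ a j <> 0%Z) ->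
  (exists j, In j L /\ (a j > 0)%Z) /\ (exists j, In j L /\ (a j < 0)%Z).
Proof.
  intros Hs Hnz. split; apply NNPP; intro Hn.
  - assert (Hle : forall j, In j L -> (a j <= 0)%Z).
    { intros j Hj. destruct (Z_le_gt_dec (a j) 0); auto. exfalso; apply Hn; exists j; auto. }
    assert (forall j, In j L -> a j = 0%Z); [|destruct Hnz as [j [Hj Hj2]]; auto].
    clear Hn Hnz. revert Hs Hle. induction L as [|i L IH]; intros Hs Hle j Hj; [destruct Hj|].
    simpl in Hs. assert (Hi := Hle i (or_introl eq_refl)).
    assert (Hr : (fold_right Z.add 0 (map a L) <= 0)%Z).
    { clear IH Hs Hj. induction L as [|k L IHL]; simpl; [lia|].
      assert (a k <= 0)%Z by (apply Hle; simpl; auto).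
      assert (fold_right Z.add 0 (map a L) <= 0)%Z; [|lia].
      apply IHL. intros l [<-|Hl]; [auto| apply Hle; simpl; auto]. }
    destruct Hj as [<-|Hj]; [lia|]. apply IH; auto; [lia| intros; apply Hle; simpl; auto].
  - assert (Hle : forall j, In j L -> (a j >= 0)%Z).
    { intros j Hj. destruct (Z_lt_ge_dec (a j) 0); auto. exfalso; apply Hn; exists j; auto. }
    assert (forall j, In j L -> a j = 0%Z); [|destruct Hnz as [j [Hj Hj2]]; auto].
    clear Hn Hnz. revert Hs Hle. induction L as [|i L IH]; intros Hs Hle j Hj; [destruct Hj|].
    simpl in Hs. assert (Hi := Hle i (or_introl eq_refl)).
    assert (Hr : (fold_right Z.add 0 (map a L) >= 0)%Z).
    { clear IH Hs Hj. induction L as [|k L IHL]; simpl; [lia|].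
      assert (a k >= 0)%Z by (apply Hle; simpl; auto).
      assert (fold_right Z.add 0 (map a L) >= 0)%Z; [|lia].
      apply IHL. intros l [<-|Hl]; [auto| apply Hle; simpl; auto]. }
    destruct Hj as [<-|Hj]; [lia|]. apply IH; auto; [lia| intros; apply Hle; simpl; auto].
Qed.

Lemma cos_2pi_shift x : cos (x + 2 * PI) = cos x.
Proof. rewrite cos_plus, cos_2PI, sin_2PI; ring. Qed.
Lemma sin_2pi_shift x : sin (x + 2 * PI) = sin x.
Proof. rewrite sin_plus, cos_2PI, sin_2PI; ring. Qed.

Lemma polar x y r : 0 < r -> x ^ 2 + y ^ 2 = r ^ 2 -> exists b, x = r * cos b /\ y = r * sin b.
Proof.
  intros Hr E. set (z := x / r).
  assert (Ezr : z * r = x) by (unfold z; field; lra).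
  assert (Hz2 : z ^ 2 <= 1).
  { apply Rmult_le_reg_r with (r ^ 2); [nra|]. replace (z ^ 2 * r ^ 2) with (x ^ 2) by (rewrite <- Ezr; ring). nra. }
  assert (Hz : -1 <= z <= 1) by (split; nra).
  assert (Hs : sqrt (1 - z ^ 2) = Rabs y / r).
  { replace (1 - z ^ 2) with ((Rabs y / r) ^ 2).
    - apply sqrt_pow2. apply Rmult_le_pos; [apply Rabs_pos| left; apply Rinv_0_lt_compat; auto].
    - replace ((Rabs y / r) ^ 2) with (Rabs y ^ 2 / r ^ 2) by (field; lra).
      rewrite pow2_abs. unfold z. replace ((x / r) ^ 2) with (x ^ 2 / r ^ 2) by (field; lra).
      replace (y ^ 2) with (r ^ 2 - x ^ 2) by lra. field. lra. }
  assert (Hx : x = r * cos (acos z)) by (rewrite cos_acos; auto; unfold z; field; lra).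
  assert (Hsin : sin (acos z) = Rabs y / r). { rewrite sin_acos by auto. rewrite <- Hs. f_equal. unfold Rsqr; ring. }
  destruct (Rle_dec 0 y).
  - exists (acos z). split; auto. rewrite Hsin. rewrite Rabs_pos_eq; auto. field; lra.
  - exists (- acos z). rewrite cos_neg, sin_neg. split; auto. rewrite Hsin.
    rewrite Rabs_left; [field|]; lra.
Qed.

Ltac toR := match goal with |- ?a = ?b => change (@eq R a b) end.

Lemma d_shift (c x : R) : is_derive (fun t => t - c) x 1.
Proof. apply (d_eq _ _ (1 + 0)); [|ring]. apply (d_plus (fun t => t) (fun _ => - c)); [apply d_id| apply d_const]. Qed.

Definition Vf (c : R) (K : R -> R) (x : R) := (x - c) * sqrt (K x).
Definition Vdf (c : R) (K Kd : R -> R) (x : R) :=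
  sqrt (K x) + (x - c) * Kd x / (2 * sqrt (K x)).

Lemma V_deriv (c : R) (K Kd : R -> R) (x : R) : is_derive K x (Kd x) -> 0 < K x -> is_derive (Vf c K) x (Vdf c K Kd x).
Proof.
  intros D Hk. unfold Vf, Vdf.
  assert (Hs : 0 < sqrt (K x)) by (apply sqrt_lt_R0; auto).
  eapply d_eq.
  - apply (d_mult (fun t => t - c) (fun t => sqrt (K t))).
    + apply d_shift.
    + apply is_derive_sqrt; [exact D| auto].
  - field. lra.
Qed.

Lemma V_cont (c : R) (K Kd : R -> R) (x : R) : (forall y, is_derive K y (Kd y)) -> continuity_pt Kd x -> 0 < K x ->
  continuity_pt (Vdf c K Kd) x.
Proof.
  intros D Hkd Hk. unfold Vdf.
  assert (Hs : 0 < sqrt (K x)) by (apply sqrt_lt_R0; auto).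
  assert (CK : continuity_pt K x) by (apply (deriv_cont K x (Kd x)), D).
  assert (CS : continuity_pt (fun t => sqrt (K t)) x).
  { apply (continuity_pt_comp K sqrt x); auto. apply continuity_pt_sqrt; lra. }
  apply (continuity_pt_plus (fun t => sqrt (K t)) (fun t => (t - c) * Kd t / (2 * sqrt (K t)))); auto.
  apply (continuity_pt_div (fun t => (t - c) * Kd t) (fun t => 2 * sqrt (K t))).
  - apply (continuity_pt_mult (fun t => t - c) Kd); auto.
    apply (continuity_pt_minus (fun t => t) (fun _ => c)). apply derivable_continuous_pt, derivable_pt_id.
    apply continuity_pt_const. intros u v; auto.
  - apply (continuity_pt_mult (fun _ => 2) (fun t => sqrt (K t))); auto.
    apply continuity_pt_const. intros u v; auto.
  - lra.
Qed.

Lemma V_prod (c : R) (K Kd Qd Qf : R -> R) (Qc x : R) :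
  (forall y, Qf y = Qc - (y - c) ^ 2 * K y) -> (forall y, is_derive Qf y (Qd y)) ->
  (forall y, is_derive K y (Kd y)) -> 0 < K x ->
  Vf c K x * Vdf c K Kd x = - Qd x / 2.
Proof.
  intros EQ DQ DK Hk.
  assert (Hs : 0 < sqrt (K x)) by (apply sqrt_lt_R0; auto).
  assert (Qdx : Qd x = - (2 * (x - c) * K x + (x - c) ^ 2 * Kd x)).
  { assert (D1 : is_derive Qf x (- (2 * (x - c) * K x + (x - c) ^ 2 * Kd x))).
    { apply (d_ext (fun y => Qc + (-1) * ((y - c) ^ 2 * K y))); [intros; rewrite EQ; ring|].
      eapply d_eq.
      - apply (d_plus (fun _ => Qc) (fun y => (-1) * ((y - c) ^ 2 * K y))); [apply d_const|].
        apply (is_derive_scal (fun y => (y - c) ^ 2 * K y) x (-1)) .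
        apply (d_mult (fun y => (y - c) ^ 2) K); [|apply DK].
        apply (d_ext (fun y => (y - c) * (y - c))); [intros; ring|].
        eapply d_eq. apply (d_mult (fun y => y - c) (fun y => y - c)); apply d_shift.
        reflexivity.
      - ring. }
    rewrite <- (is_derive_unique _ _ _ (DQ x)). rewrite (is_derive_unique _ _ _ D1). reflexivity. }
  rewrite Qdx. unfold Vf, Vdf.
  assert (sqrt (K x) * sqrt (K x) = K x) by (apply sqrt_sqrt; lra).
  field_simplify; [|lra]. rewrite pow2_sqrt by lra. reflexivity.
Qed.

Lemma inverse_on (f fd : R -> R) (a b : R) : a < b ->
  (forall x, a <= x <= b -> is_derive f x (fd x) /\ 0 < fd x) ->
  exists h, forall y, f a < y < f b -> a < h y < b /\ f (h y) = y /\ is_derive h y (1 / fd (h y)).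
Proof.
  intros Hab Hd.
  set (h := fun y => epsilon (inhabits 0) (fun x => a <= x <= b /\ f x = y)).
  assert (Hs := incr_strict f fd a b Hd).
  assert (Hh : forall y, f a < y < f b -> a < h y < b /\ f (h y) = y).
  { intros y Hy.
    assert (Ex : exists x, a <= x <= b /\ f x = y).
    { destruct (IVT_interv (fun x => f x - y) a b) as [z [Hz Ez]]; auto; try lra.
      - intros x Hx. apply (continuity_pt_minus f (fun _ => y)).
        apply (deriv_cont f x (fd x)), Hd; auto. apply continuity_pt_const; intros u v; auto.
      - exists z; split; auto; lra. }
    destruct (epsilon_spec (inhabits 0) _ Ex) as [R1 E1].
    change (a <= h y <= b) in R1. change (f (h y) = y) in E1.
    split; auto. split.
    - destruct (Req_dec (h y) a) as [Ea|]; [rewrite Ea in E1; lra| lra].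
    - destruct (Req_dec (h y) b) as [Eb|]; [rewrite Eb in E1; lra| lra]. }
  exists h. intros y Hy. destruct (Hh y Hy) as [R1 E1]. split; auto. split; auto.
  apply (inv_deriv_core f fd h a b y Hab Hd Hh Hy).
Qed.

Lemma inverse_global (f fd : R -> R) :
  (forall x, is_derive f x (fd x) /\ 0 < fd x) ->
  (forall y, exists a b, a < b /\ f a < y < f b) ->
  exists h, forall y, f (h y) = y /\ is_derive h y (1 / fd (h y)).
Proof.
  intros Hd Hsurj.
  assert (Hs : forall x z, x < z -> f x < f z).
  { intros x z Hxz. apply (incr_strict f fd x z); try lra; intros; apply Hd. }
  set (h := fun y => epsilon (inhabits 0) (fun x => f x = y)).
  assert (Hh : forall y, f (h y) = y).
  { intros y. destruct (Hsurj y) as [a [b [Hab Hy]]].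
    assert (Ex : exists x, f x = y).
    { destruct (IVT_interv (fun x => f x - y) a b) as [z [Hz Ez]]; auto; try lra.
      - intros x Hx. apply (continuity_pt_minus f (fun _ => y)).
        apply (deriv_cont f x (fd x)), Hd; auto. apply continuity_pt_const; intros u v; auto.
      - exists z; lra. }
    exact (epsilon_spec (inhabits 0) _ Ex). }
  exists h. intros y. split; auto.
  destruct (Hsurj y) as [a [b [Hab Hy]]].
  apply (inv_deriv_core f fd h a b y Hab); auto.
  intros y' Hy'. split; auto. split.
  - destruct (Rlt_dec a (h y')) as [|Hn]; auto.
    destruct (Req_dec (h y') a) as [E|]. rewrite <- E in Hy'. rewrite Hh in Hy'. lra.
    assert (f (h y') < f a) by (apply Hs; lra). rewrite Hh in H0. lra.
  - destruct (Rlt_dec (h y') b) as [|Hn]; auto.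
    destruct (Req_dec (h y') b) as [E|]. rewrite <- E in Hy'. rewrite Hh in Hy'. lra.
    assert (f b < f (h y')) by (apply Hs; lra). rewrite Hh in H0. lra.
Qed.

Lemma d_cos (x : R) : is_derive cos x (- sin x).
Proof. apply is_derive_Reals, derivable_pt_lim_cos. Qed.
Lemma d_sin (x : R) : is_derive sin x (cos x).
Proof. apply is_derive_Reals, derivable_pt_lim_sin. Qed.
Lemma d_sub (f g : R -> R) (x df dg : R) : is_derive f x df -> is_derive g x dg ->
  is_derive (fun t => f t - g t) x (df - dg).
Proof. intros. exact (is_derive_minus f g x df dg H H0). Qed.
Lemma d_addc (k x : R) : is_derive (fun t => t + k) x 1.
Proof. apply (d_eq _ _ (1 + 0)); [|ring]. apply (d_plus (fun t => t) (fun _ => k)); [apply d_id| apply d_const]. Qed.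
Lemma cont_comp (f g : R -> R) (x : R) : continuity_pt g x -> continuity_pt f (g x) ->
  continuity_pt (fun t => f (g t)) x.
Proof. intros. exact (continuity_pt_comp g f x H H0). Qed.

Lemma core (Qf Qd K : R -> R) (c p q Qc A u0 w0 : R) :
  (forall x, is_derive Qf x (Qd x)) -> poly K ->
  (forall x, Qf x = Qc - (x - c) ^ 2 * K x) ->
  p < c < q -> (forall x, p <= x <= q -> 0 < K x) ->
  (forall x, p <= x < c -> Qd x > 0) -> (forall x, c < x <= q -> Qd x < 0) ->
  0 < A -> A ^ 2 < Qc -> Qf p < A ^ 2 -> Qf q < A ^ 2 ->
  p < u0 < q -> w0 ^ 2 + A ^ 2 = Qf u0 ->
  exists (u w : R -> R) (P : R), 0 < P /\
   (forall t, is_derive u t (2 * w t) /\ is_derive w t (Qd (u t)) /\ p < u t < q /\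
      Qf (u t) = A ^ 2 + w t ^ 2 /\ u (t + P) = u t /\ w (t + P) = w t) /\
   u 0 = u0 /\ w 0 = w0 /\ (exists t1 t2, u t1 <> u t2) /\ (exists t1 t2, w t1 <> w t2).
Proof.
  intros DQ PK EQ Hpcq HK Hl Hr HA HAQ Hp Hq Hu0 Hw0.
  destruct (poly_deriv K PK) as [Kd [PKd DK]].
  set (V := Vf c K). set (Vd := Vdf c K Kd).
  assert (VD : forall x, p <= x <= q -> is_derive V x (Vd x)) by (intros; apply V_deriv; auto; apply HK; auto).
  assert (VP : forall x, p <= x <= q -> V x * Vd x = - Qd x / 2)
    by (intros; apply (V_prod c K Kd Qd Qf Qc); auto; apply HK; auto).
  assert (VS : forall x, p <= x <= q -> V x ^ 2 = Qc - Qf x).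
  { intros x Hx. unfold V, Vf. rewrite EQ. rewrite Rpow_mult_distr, pow2_sqrt; [ring| left; apply HK; auto]. }
  assert (Vpos : forall x, p <= x <= q -> 0 < Vd x).
  { intros x Hx. assert (Kx := HK x Hx). assert (Sx : 0 < sqrt (K x)) by (apply sqrt_lt_R0; auto).
    assert (E := VP x Hx). unfold V, Vf in E.
    destruct (Rtotal_order x c) as [Hlt|[Heq|Hgt]].
    - assert (Qd x > 0) by (apply Hl; lra).
      assert ((x - c) * sqrt (K x) < 0) by nra. nra.
    - subst x. unfold Vd, Vdf.
      replace ((c - c) * Kd c / (2 * sqrt (K c))) with 0 by (field; lra). lra.
    - assert (Qd x < 0) by (apply Hr; lra).
      assert ((x - c) * sqrt (K x) > 0) by nra. nra. }
  set (rho := sqrt (Qc - A ^ 2)).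
  assert (Hrho : 0 < rho) by (apply sqrt_lt_R0; lra).
  assert (Hrho2 : rho ^ 2 = Qc - A ^ 2) by (apply pow2_sqrt; lra).
  assert (Vp : V p < - rho).
  { assert (V p < 0). { unfold V, Vf. assert (0 < sqrt (K p)) by (apply sqrt_lt_R0, HK; lra). nra. }
    assert (V p ^ 2 > rho ^ 2) by (rewrite VS by lra; lra). nra. }
  assert (Vq : rho < V q).
  { assert (V q > 0). { unfold V, Vf. assert (0 < sqrt (K q)) by (apply sqrt_lt_R0, HK; lra). nra. }
    assert (V q ^ 2 > rho ^ 2) by (rewrite VS by lra; lra). nra. }
  assert (Vdd : forall x, p <= x <= q -> is_derive V x (Vd x) /\ 0 < Vd x) by (intros; split; auto).
  destruct (inverse_on V Vd p q ltac:(lra) Vdd) as [U HU].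
  assert (Vs := incr_strict V Vd p q Vdd).
  assert (Uin : forall y, - rho <= y <= rho -> p < U y < q /\ V (U y) = y /\ is_derive U y (1 / Vd (U y)))
    by (intros; apply HU; lra).
  assert (UV : forall x, p < x < q -> U (V x) = x).
  { intros x Hx. assert (HH : V p < V x < V q) by (split; apply Vs; lra).
    destruct (HU (V x) HH) as [R1 [E1 _]].
    destruct (Rtotal_order (U (V x)) x) as [Hlt|[Heq|Hgt]]; auto.
    - assert (V (U (V x)) < V x) by (apply Vs; lra). lra.
    - assert (V x < V (U (V x))) by (apply Vs; lra). lra. }
  assert (Rc : forall b, - rho <= rho * cos b <= rho).
  { intros b. assert (HC := COS_bound b). split; nra. }
  set (G := fun b => 2 * Vd (U (rho * cos b))).
  assert (Gpos : forall b, 0 < G b).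
  { intros b. unfold G. destruct (Uin _ (Rc b)) as [R1 _]. assert (0 < Vd (U (rho * cos b))) by (apply Vpos; lra). lra. }
  assert (Gc : forall b, continuity_pt G b).
  { intros b. unfold G. destruct (Uin _ (Rc b)) as [R1 [_ DU]].
    apply (cont_comp (fun y => 2 * Vd y) (fun b => U (rho * cos b))).
    - apply (cont_comp U (fun b => rho * cos b)).
      + apply (deriv_cont _ _ (rho * - sin b)). apply (is_derive_scal cos b rho). apply d_cos.
      + apply (deriv_cont _ _ _ DU).
    - apply (continuity_pt_mult (fun _ => 2) Vd). apply continuity_pt_const; intros u v; auto.
      apply V_cont; auto. apply poly_cont; auto. apply HK; lra. }
  set (ig := fun b => 1 / G b).
  assert (igpos : forall b, 0 < ig b) by (intros; unfold ig; apply Rdiv_lt_0_compat; [lra| auto]).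
  assert (igc : forall b, continuous ig b).
  { intros b. apply continuity_pt_filterlim.
    apply (continuity_pt_div (fun _ => 1) G); auto. apply continuity_pt_const; intros u v; auto.
    assert (0 < G b) by auto. lra. }
  destruct (polar (V u0) (- w0) rho Hrho) as [b0 [Eb1 Eb2]].
  { rewrite Hrho2. assert (V u0 ^ 2 = Qc - Qf u0) by (apply VS; lra). nra. }
  set (tau := (fun b => RInt ig b0 b : R)).
  assert (Dtau : forall b, is_derive tau b (ig b)).
  { intros b. apply (is_derive_RInt ig tau b0 b).
    - apply filter_forall. intros x. unfold tau. apply (RInt_correct ig b0 x).
      apply (ex_RInt_continuous ig). intros; apply igc.
    - apply igc. }
  assert (tau0 : tau b0 = 0) by (unfold tau; rewrite RInt_point; reflexivity).
  assert (taud : forall b, is_derive tau b (ig b) /\ 0 < ig b) by (intros; split; auto).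
  assert (taus : forall x z, x < z -> tau x < tau z).
  { intros x z Hxz. apply (incr_strict tau ig x z); try lra; intros; apply taud. }
  assert (tauinj : forall x z, tau x = tau z -> x = z).
  { intros x z E. destruct (Rtotal_order x z) as [Hlt|[Heq|Hgt]]; auto.
    - assert (tau x < tau z) by auto. lra.
    - assert (tau z < tau x) by auto. lra. }
  set (P := tau (b0 + 2 * PI)).
  assert (Per : forall b, tau (b + 2 * PI) = tau b + P).
  { assert (Hc : forall b, is_derive (fun b => tau (b + 2 * PI) - tau b) b 0).
    { intros b. eapply d_eq.
      - apply (d_sub (fun b => tau (b + 2 * PI)) tau).
        + apply (d_comp tau (fun b => b + 2 * PI)). apply Dtau.
          apply d_addc.
        + apply Dtau.
      - unfold ig, G. rewrite cos_2pi_shift. ring. }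
    intros b. assert (E := const_global _ Hc b b0). cbv beta in E. fold P in E. lra. }
  assert (HP : 0 < P) by (unfold P; rewrite <- tau0; apply taus; assert (PI > 0) by apply PI_RGT_0; lra).
  assert (Mult : forall n : nat, tau (b0 + INR n * (2 * PI)) = INR n * P /\ tau (b0 - INR n * (2 * PI)) = - INR n * P).
  { induction n as [|n [IH1 IH2]].
    - change (INR 0) with 0. replace (b0 + 0 * (2 * PI)) with b0 by ring. replace (b0 - 0 * (2 * PI)) with b0 by ring.
      rewrite tau0. split; ring.
    - rewrite S_INR. split.
      + replace (b0 + (INR n + 1) * (2 * PI)) with ((b0 + INR n * (2 * PI)) + 2 * PI) by ring.
        rewrite Per, IH1. ring.
      + assert (E := Per (b0 - (INR n + 1) * (2 * PI))).
        replace (b0 - (INR n + 1) * (2 * PI) + 2 * PI) with (b0 - INR n * (2 * PI)) in E by ring.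
        rewrite IH2 in E. lra. }
  assert (Surj : forall y, exists a b, a < b /\ tau a < y < tau b).
  { intros y. destruct (INR_unbounded (Rabs y / P)) as [n Hn].
    assert (HnP : INR n * P > Rabs y).
    { apply Rmult_lt_reg_r with (/ P). apply Rinv_0_lt_compat; auto.
      replace (INR n * P * / P) with (INR n) by (field; lra). exact Hn. }
    assert (Hn0 : INR n > 0) by (assert (0 <= Rabs y) by apply Rabs_pos; nra).
    exists (b0 - INR n * (2 * PI)), (b0 + INR n * (2 * PI)).
    destruct (Mult n) as [M1 M2]. rewrite M1, M2.
    assert (PI > 0) by apply PI_RGT_0.
    assert (Ha1 := Rle_abs y). assert (Ha2 := Rle_abs (- y)). rewrite Rabs_Ropp in Ha2.
    split; [nra| lra]. }
  destruct (inverse_global tau ig taud Surj) as [B HB].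
  assert (BD : forall t, is_derive B t (G (B t))).
  { intros t. destruct (HB t) as [_ D]. eapply d_eq; [exact D|]. unfold ig.
    assert (0 < G (B t)) by auto. field. lra. }
  assert (Btau : forall x, B (tau x) = x) by (intros; apply tauinj; apply HB).
  assert (B0 : B 0 = b0) by (rewrite <- tau0; apply Btau).
  assert (BP : forall t, B (t + P) = B t + 2 * PI).
  { intros t. apply tauinj. rewrite Per. rewrite (proj1 (HB (t + P))), (proj1 (HB t)). reflexivity. }
  set (u := fun t => U (rho * cos (B t))).
  set (w := fun t => - rho * sin (B t)).
  exists u, w, P. split; auto. split; [|split; [|split; [|split]]].
  - intros t. destruct (Uin _ (Rc (B t))) as [R1 [E1 DU]].
    assert (Vu : 0 < Vd (u t)) by (apply Vpos; unfold u; lra).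
    split; [|split; [|split; [|split; [|split]]]].
    + unfold u. eapply d_eq.
      * apply (d_comp U (fun t => rho * cos (B t))); [exact DU|].
        apply (d_comp (fun x => rho * cos x) B); [| apply BD].
        apply (is_derive_scal cos (B t) rho). apply d_cos.
      * unfold w, G. fold (u t). field. lra.
    + unfold w. eapply d_eq.
      * apply (d_comp (fun x => - rho * sin x) B); [| apply BD].
        apply (is_derive_scal sin (B t) (- rho)). apply d_sin.
      * assert (E2 := VP (u t) ltac:(unfold u; lra)). unfold u in E2 |- *. rewrite E1 in E2.
        unfold G. lra.
    + unfold u; lra.
    + assert (E3 := VS (u t) ltac:(unfold u; lra)). unfold u in E3 |- *. rewrite E1 in E3.
      unfold w. assert (SC := sin2_cos2 (B t)). unfold Rsqr in SC.
      replace (Qf (U (rho * cos (B t)))) with (Qc - (rho * cos (B t)) ^ 2) by lra.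
      replace Qc with (rho ^ 2 + A ^ 2) by lra. nra.
    + unfold u. rewrite BP, cos_2pi_shift. reflexivity.
    + unfold w. rewrite BP, sin_2pi_shift. reflexivity.
  - unfold u. rewrite B0, <- Eb1. apply UV; lra.
  - unfold w. rewrite B0. lra.
  - exists (tau 0), (tau PI). unfold u. rewrite !Btau, cos_0, cos_PI. intro E.
    destruct (Uin rho ltac:(lra)) as [_ [E1 _]]. destruct (Uin (- rho) ltac:(lra)) as [_ [E2 _]].
    replace (rho * 1) with rho in E by ring. replace (rho * -1) with (- rho) in E by ring.
    rewrite E in E1. lra.
  - exists (tau (PI / 2)), (tau (- (PI / 2))). unfold w. rewrite !Btau, sin_neg, sin_PI2. lra.
Qed.

Lemma locally_interval (P : R -> Prop) (c a b : R) : a < c < b -> (forall x, a < x < b -> P x) -> locally c P.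
Proof.
  intros Hc H. assert (Hp : 0 < Rmin (c - a) (b - c)) by (apply Rmin_glb_lt; lra).
  exists (mkposreal _ Hp). intros y Hy. change (Rabs (y - c) < Rmin (c - a) (b - c)) in Hy.
  assert (Rmin (c - a) (b - c) <= c - a) by apply Rmin_l.
  assert (Rmin (c - a) (b - c) <= b - c) by apply Rmin_r.
  apply H. assert (Ha1 := Rle_abs (y - c)). assert (Ha2 := Rle_abs (- (y - c))). rewrite Rabs_Ropp in Ha2. lra.
Qed.

Lemma DL_open a L x : DL a L x -> exists r, 0 < r /\ forall y, Rabs (y - x) < r -> DL a L y.
Proof.
  induction L as [|j L IH]; intros H.
  - exists 1. split; [lra|]. intros y _ i Hi. destruct Hi.
  - destruct (IH (fun i Hi => H i (or_intror Hi))) as [r [Hr Hr2]].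
    assert (Hj : IZR (a j) * x + 1 > 0) by (apply H; simpl; auto).
    set (rj := (IZR (a j) * x + 1) / (Rabs (IZR (a j)) + 1)).
    assert (Hab := Rabs_pos (IZR (a j))).
    assert (Hrj : 0 < rj) by (unfold rj; apply Rdiv_lt_0_compat; lra).
    exists (Rmin r rj). split; [apply Rmin_glb_lt; auto|].
    intros y Hy. assert (Rmin r rj <= r) by apply Rmin_l. assert (Rmin r rj <= rj) by apply Rmin_r.
    intros i [<-|Hi]; [|apply Hr2; auto; lra].
    assert (E : Rabs (IZR (a j) * y + 1 - (IZR (a j) * x + 1)) = Rabs (IZR (a j)) * Rabs (y - x)).
    { rewrite <- Rabs_mult. f_equal. ring. }
    assert (Rabs (IZR (a j)) * Rabs (y - x) <= Rabs (IZR (a j)) * rj).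
    { apply Rmult_le_compat_l; auto. lra. }
    assert (Rabs (IZR (a j)) * rj < IZR (a j) * x + 1).
    { unfold rj. apply Rmult_lt_reg_r with (Rabs (IZR (a j)) + 1); [lra|].
      field_simplify; [|lra]. nra. }
    assert (Ha2 := Rle_abs (- (IZR (a j) * y + 1 - (IZR (a j) * x + 1)))). rewrite Rabs_Ropp in Ha2.
    lra.
Qed.

Lemma lim_ge (f : R -> R) (t c : R) : continuity_pt f t ->
  (forall d, 0 < d -> exists s, Rabs (s - t) < d /\ c <= f s) -> c <= f t.
Proof.
  intros Hc H. apply Rnot_lt_le. intro Hlt.
  destruct (Hc (c - f t)) as [d [Hd Hd2]]; [lra|].
  destruct (H d Hd) as [s [Hs Hfs]].
  destruct (Req_dec s t) as [->|Hne]; [lra|].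
  assert (R_dist (f s) (f t) < c - f t).
  { apply Hd2. split; [split; [constructor| auto]| exact Hs]. }
  unfold R_dist in H0. assert (Ha := Rle_abs (f s - f t)). lra.
Qed.

Lemma atan_eq (A w : R) : 0 < A ->
  cos (atan (w / A)) = A / sqrt (A ^ 2 + w ^ 2) /\ sin (atan (w / A)) = w / sqrt (A ^ 2 + w ^ 2).
Proof.
  intros HA. set (s := sqrt (A ^ 2 + w ^ 2)).
  assert (Hs : 0 < s) by (apply sqrt_lt_R0; nra).
  assert (Hs2 : s ^ 2 = A ^ 2 + w ^ 2) by (apply pow2_sqrt; nra).
  assert (E : sqrt (1 + (w / A)²) = s / A).
  { rewrite Rsqr_pow2. replace (1 + (w / A) ^ 2) with ((s / A) ^ 2).
    2: { replace ((s / A) ^ 2) with (s ^ 2 / A ^ 2) by (field; lra). rewrite Hs2. field; lra. }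
    apply sqrt_pow2. left; apply Rdiv_lt_0_compat; auto. }
  rewrite cos_atan, sin_atan, E. split; field; lra.
Qed.

Lemma trig_shift (th0 g0 g : R) : sin th0 = cos g0 -> cos th0 = sin g0 ->
  cos (th0 + g0 - g) = sin g /\ sin (th0 + g0 - g) = cos g.
Proof.
  intros E1 E2. assert (SC := sin2_cos2 g0). unfold Rsqr in SC.
  rewrite cos_minus, sin_minus, cos_plus, sin_plus, E1, E2.
  split.
  - transitivity ((sin g0 * sin g0 + cos g0 * cos g0) * sin g); [ring| rewrite SC; ring].
  - transitivity ((sin g0 * sin g0 + cos g0 * cos g0) * cos g); [ring| rewrite SC; ring].
Qed.

Lemma S1_decr a L x z : x < z -> (forall y, x <= y <= z -> DL a L y) ->
  (exists j, In j L /\ a j <> 0%Z) -> SL 1 a L z < SL 1 a L x.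
Proof.
  intros Hxz HD Hnz.
  assert (X : - SL 1 a L x < - SL 1 a L z); [|lra].
  apply (incr_strict (fun y => - SL 1 a L y) (SdL a L) x z); try lra.
  intros y Hy. split.
  - eapply d_eq. apply (is_derive_opp (SL 1 a L)). apply SL1_deriv, HD; auto. simpl. unfold opp; simpl. ring.
  - apply SdL_pos; auto.
Qed.

Lemma trap a L Qd p c q e x :
  (forall y, is_derive (QL a L) y (Qd y)) -> (forall y, DL a L y -> Qd y = QL a L y * SL 1 a L y) ->
  (exists j, In j L /\ a j <> 0%Z) ->
  p < c < q -> DL a L c -> SL 1 a L c = 0 -> QL a L p < e -> QL a L q < e ->
  DL a L x -> e <= QL a L x -> p <= x <= q.
Proof.
  intros DQ EQd Hnz Hc Dc S0 Hp Hq Dx Hx.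
  split; apply Rnot_lt_le; intro Hlt.
  - assert (HD : forall y, x <= y <= c -> DL a L y) by (intros; apply (DL_convex a L x y c); auto).
    assert (QL a L x < QL a L p); [|lra].
    apply (incr_strict (QL a L) Qd x p); try lra.
    intros y Hy. split; [apply DQ|]. rewrite EQd by (apply HD; lra).
    apply Rmult_lt_0_compat. apply QL_pos, HD; lra.
    rewrite <- S0. apply S1_decr; auto; try lra. intros; apply HD; lra.
  - assert (HD : forall y, c <= y <= x -> DL a L y) by (intros; apply (DL_convex a L c y x); auto).
    assert (- QL a L q < - QL a L x); [|lra].
    apply (incr_strict (fun y => - QL a L y) (fun y => - Qd y) q x); try lra.
    intros y Hy. split.
    + eapply d_eq. apply (is_derive_opp (QL a L)). apply DQ. unfold opp; simpl; ring.
    + rewrite EQd by (apply HD; lra).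
      assert (QL a L y > 0) by (apply QL_pos, HD; lra).
      assert (SL 1 a L y < 0); [|nra].
      rewrite <- S0. apply S1_decr; auto; try lra. intros; apply HD; lra.
Qed.

Lemma QL_at0 a L : QL a L 0 = 1.
Proof. induction L as [|j L IH]; unfold QL in *; simpl; [reflexivity| rewrite IH; ring]. Qed.

Lemma DL_at0 a L : DL a L 0.
Proof. intros j _. lra. Qed.

Lemma Qd_form (Qf Qd K Kd : R -> R) (c Qc : R) : (forall y, Qf y = Qc - (y - c) ^ 2 * K y) ->
  (forall y, is_derive Qf y (Qd y)) -> (forall y, is_derive K y (Kd y)) ->
  forall x, Qd x = - (2 * (x - c) * K x + (x - c) ^ 2 * Kd x).
Proof.
  intros EQ DQ DK x.
  assert (D1 : is_derive Qf x (- (2 * (x - c) * K x + (x - c) ^ 2 * Kd x))).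
  { apply (d_ext (fun y => Qc + (-1) * ((y - c) ^ 2 * K y))); [intros; rewrite EQ; ring|].
    eapply d_eq.
    - apply (d_plus (fun _ => Qc) (fun y => (-1) * ((y - c) ^ 2 * K y))); [apply d_const|].
      apply (is_derive_scal (fun y => (y - c) ^ 2 * K y) x (-1)) .
      apply (d_mult (fun y => (y - c) ^ 2) K); [|apply DK].
      apply (d_ext (fun y => (y - c) * (y - c))); [intros; ring|].
      eapply d_eq. apply (d_mult (fun y => y - c) (fun y => y - c)); apply d_shift.
      reflexivity.
    - ring. }
  rewrite <- (is_derive_unique _ _ _ (DQ x)). rewrite (is_derive_unique _ _ _ D1). reflexivity.
Qed.

Lemma construct a L u0 A w0 :
  (exists j, In j L /\ (a j > 0)%Z) -> (exists j, In j L /\ (a j < 0)%Z) ->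
  (exists j, In j L /\ a j <> 0%Z) -> DL a L u0 -> 0 < A < 1 -> w0 ^ 2 + A ^ 2 = QL a L u0 ->
  exists p q (Qd : R -> R), p < u0 < q /\ (forall y, is_derive (QL a L) y (Qd y)) /\ poly Qd /\
   (forall y, DL a L y -> Qd y = QL a L y * SL 1 a L y) /\
   (forall x, p <= x <= q -> DL a L x) /\ (forall x, DL a L x -> A ^ 2 <= QL a L x -> p <= x <= q) /\
   exists (u w : R -> R) (P : R), 0 < P /\
   (forall t, is_derive u t (2 * w t) /\ is_derive w t (Qd (u t)) /\ p < u t < q /\
      QL a L (u t) = A ^ 2 + w t ^ 2 /\ u (t + P) = u t /\ w (t + P) = w t) /\
   u 0 = u0 /\ w 0 = w0 /\ (exists t1 t2, u t1 <> u t2) /\ (exists t1 t2, w t1 <> w t2).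
Proof.
  intros Hpos Hneg Hnz Du0 HA Hw0.
  set (Qf := QL a L).
  assert (HA2 : 0 < A ^ 2) by nra.
  assert (HA1 : A ^ 2 < 1) by nra.
  assert (Dm0 : DL a L (Rmin 0 u0)) by (unfold Rmin; destruct Rle_dec; auto; apply DL_at0).
  assert (DM0 : DL a L (Rmax 0 u0)) by (unfold Rmax; destruct Rle_dec; auto; apply DL_at0).
  assert (Hm1 := Rmin_l 0 u0). assert (Hm2 := Rmin_r 0 u0).
  assert (HM1 := Rmax_l 0 u0). assert (HM2 := Rmax_r 0 u0).
  destruct (left_point a L (Rmin 0 u0) (A ^ 2) HA2 Dm0 Hpos) as [p [Hp1 [Dp Qp]]].
  destruct (right_point a L (Rmax 0 u0) (A ^ 2) HA2 DM0 Hneg) as [q [Hq1 [Dq Qq]]].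
  assert (HD : forall x, p <= x <= q -> DL a L x) by (intros; apply (DL_convex a L p x q); auto).
  destruct (poly_deriv Qf (QL_poly a L)) as [Qd [PQd DQ]].
  assert (EQd : forall y, DL a L y -> Qd y = QL a L y * SL 1 a L y).
  { intros y Dy. rewrite <- (is_derive_unique _ _ _ (DQ y)). apply is_derive_unique. apply QL_deriv; auto. }
  destruct (continuity_ab_maj Qf p q ltac:(lra)) as [c [Hmax Hc]].
  { intros; apply poly_cont, QL_poly. }
  assert (Q0 : Qf 0 = 1) by apply QL_at0.
  assert (Qc1 : 1 <= Qf c) by (rewrite <- Q0; apply Hmax; lra).
  assert (Hpcq : p < c < q).
  { destruct Hc as [Hc1 Hc2]. split.
    - destruct Hc1 as [|E]; auto. subst c. unfold Qf in *. lra.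
    - destruct Hc2 as [|E]; auto. subst c. unfold Qf in *. lra. }
  assert (Qdc : Qd c = 0).
  { assert (pr : derivable_pt Qf c) by (exists (Qd c); apply is_derive_Reals, DQ).
    assert (E := deriv_maximum Qf p q c pr (proj1 Hpcq) (proj2 Hpcq) ltac:(intros; apply Hmax; lra)).
    rewrite <- E. symmetry. apply derive_pt_eq_0. apply is_derive_Reals, DQ. }
  assert (Dc : DL a L c) by (apply HD; lra).
  assert (Qcpos : QL a L c > 0) by (apply QL_pos; auto).
  assert (S0 : SL 1 a L c = 0).
  { assert (E := EQd c Dc). rewrite Qdc in E. symmetry in E. apply Rmult_integral in E. destruct E; auto. lra. }
  assert (Hl : forall x, p <= x < c -> Qd x > 0).
  { intros x Hx. rewrite EQd by (apply HD; lra). apply Rmult_lt_0_compat. apply QL_pos, HD; lra.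
    rewrite <- S0. apply S1_decr; auto; try lra. intros; apply HD; lra. }
  assert (Hr : forall x, c < x <= q -> Qd x < 0).
  { intros x Hx. rewrite EQd by (apply HD; lra).
    assert (QL a L x > 0) by (apply QL_pos, HD; lra).
    assert (SL 1 a L x < 0); [|nra].
    rewrite <- S0. apply S1_decr; auto; try lra. intros; apply HD; lra. }
  destruct (poly_div Qf c (QL_poly a L)) as [q1 [Pq1 E1]].
  destruct (poly_div q1 c Pq1) as [q2 [Pq2 E2]].
  assert (q1c : q1 c = 0).
  { destruct (poly_deriv q1 Pq1) as [q1' [_ Dq1]].
    assert (D : is_derive Qf c (q1 c)).
    { apply (d_ext (fun x => Qf c + (x - c) * q1 x)); [intros; rewrite <- E1; auto|].
      eapply d_eq. apply (d_plus (fun _ => Qf c) (fun x => (x - c) * q1 x)); [apply d_const|].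
      apply (d_mult (fun x => x - c) q1); [apply d_shift| apply Dq1]. ring. }
    rewrite <- Qdc. rewrite <- (is_derive_unique _ _ _ (DQ c)). symmetry. apply is_derive_unique; auto. }
  set (K := fun x => (-1) * q2 x).
  assert (PK : poly K) by (apply poly_mul; [constructor| auto]).
  assert (EQ : forall x, Qf x = Qf c - (x - c) ^ 2 * K x).
  { intros x. rewrite (E1 x), (E2 x), q1c. unfold K. ring. }
  destruct (poly_deriv K PK) as [Kd [PKd DK]].
  destruct (poly_deriv Kd PKd) as [Kdd [_ DKd]].
  assert (QF := Qd_form Qf Qd K Kd c (Qf c) EQ DQ DK).
  assert (Kc : 0 < K c).
  { assert (D1 : is_derive Qd c (- (2 * K c))).
    { apply (d_ext (fun x => - (2 * (x - c) * K x + (x - c) ^ 2 * Kd x))); [intros; rewrite QF; auto|].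
      eapply d_eq.
      - apply (is_derive_opp (fun x => 2 * (x - c) * K x + (x - c) ^ 2 * Kd x)).
        apply (d_plus (fun x => 2 * (x - c) * K x) (fun x => (x - c) ^ 2 * Kd x)).
        + apply (d_mult (fun x => 2 * (x - c)) K); [|apply DK].
          apply (is_derive_scal (fun x => x - c) c 2). apply d_shift.
        + apply (d_mult (fun x => (x - c) ^ 2) Kd); [|apply DKd].
          apply (d_ext (fun y => (y - c) * (y - c))); [intros; ring|].
          eapply d_eq. apply (d_mult (fun y => y - c) (fun y => y - c)); apply d_shift. reflexivity.
      - unfold opp; simpl. ring. }
    assert (D2 : is_derive Qd c (Qd c * SL 1 a L c + QL a L c * (- SdL a L c))).
    { apply (is_derive_ext_loc (fun x => QL a L x * SL 1 a L x)).
      - apply (locally_interval _ c p q Hpcq). intros x Hx. symmetry. apply EQd, HD; lra.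
      - apply d_mult. apply DQ. apply SL1_deriv; auto. }
    assert (E := is_derive_unique _ _ _ D1). rewrite (is_derive_unique _ _ _ D2) in E.
    rewrite Qdc, S0 in E. assert (SdL a L c > 0) by (apply SdL_pos; auto). nra. }
  assert (HK : forall x, p <= x <= q -> 0 < K x).
  { intros x Hx. destruct (Rtotal_order x c) as [Hlt|[Heq|Hgt]].
    - assert (Qf x < Qf ((x + c) / 2)).
      { apply (incr_strict Qf Qd x ((x + c) / 2)); try lra. intros y Hy. split; [apply DQ| apply Hl; lra]. }
      assert (Qf ((x + c) / 2) <= Qf c) by (apply Hmax; lra).
      rewrite (EQ x) in H. assert (0 < (x - c) ^ 2) by nra. nra.
    - subst; auto.
    - assert (- Qf ((c + x) / 2) < - Qf x).
      { apply (incr_strict (fun y => - Qf y) (fun y => - Qd y) ((c + x) / 2) x); try lra. intros y Hy. split.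
        + eapply d_eq. apply (is_derive_opp Qf). apply DQ. unfold opp; simpl; ring.
        + assert (Qd y < 0) by (apply Hr; lra). lra. }
      assert (Qf ((c + x) / 2) <= Qf c) by (apply Hmax; lra).
      rewrite (EQ x) in H. assert (0 < (x - c) ^ 2) by nra. nra. }
  exists p, q, Qd. split; [lra|]. split; auto. split; auto. split; auto. split; auto. split.
  - intros x Dx Hx. apply (trap a L Qd p c q (A ^ 2) x); auto.
  - apply (core Qf Qd K c p q (Qf c) A u0 w0); auto; lra.
Qed.

Lemma d_exp (x : R) : is_derive exp x (exp x).
Proof. apply is_derive_Reals, derivable_pt_lim_exp. Qed.

Lemma d_sq (f : R -> R) (t df : R) : is_derive f t df -> is_derive (fun s => (f s) ^ 2) t (2 * f t * df).
Proof.
  intros D. apply (d_ext (fun s => f s * f s)); [intros; ring|].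
  eapply d_eq. apply d_mult; exact D. ring.
Qed.

Lemma gronwall (E dE : R -> R) (C : R) : (forall t, is_derive E t (dE t)) -> (forall t, 0 <= E t) ->
  (forall t, Rabs (dE t) <= C * E t) -> E 0 = 0 -> forall t, E t = 0.
Proof.
  intros D Hpos Hb E0 t. apply Rle_antisym; [|apply Hpos].
  destruct (Rle_dec 0 t) as [Ht|Ht].
  - set (Phi := fun s => E s * exp (- C * s)).
    assert (Phi t <= Phi 0).
    { apply (decr_interval Phi (fun s => dE s * exp (- C * s) + E s * ((- C) * exp (- C * s))) 0 t Ht).
      intros s Hs. split.
      - unfold Phi. apply (d_mult E (fun s => exp (- C * s))); [apply D|].
        eapply d_eq. apply (d_comp exp (fun s => - C * s) s (exp (- C * s)) (- C * 1)); [apply d_exp|].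
        apply (is_derive_scal (fun s => s) s (- C) 1). apply d_id. ring.
      - assert (Hd := Rle_abs (dE s)). assert (Hb' := Hb s). assert (0 < exp (- C * s)) by apply exp_pos.
        nra. }
    unfold Phi in H. rewrite E0 in H. assert (0 < exp (- C * t)) by apply exp_pos. nra.
  - set (Phi := fun s => - (E s * exp (C * s))).
    assert (Phi 0 <= Phi t).
    { apply (decr_interval Phi (fun s => - (dE s * exp (C * s) + E s * (C * exp (C * s)))) t 0); [lra|].
      intros s Hs. split.
      - unfold Phi. apply (d_eq _ _ (opp (dE s * exp (C * s) + E s * (C * exp (C * s))))).
        apply (is_derive_opp (fun s => E s * exp (C * s))).
        apply (d_mult E (fun s => exp (C * s))); [apply D|].
        eapply d_eq. apply (d_comp exp (fun s => C * s) s (exp (C * s)) (C * 1)); [apply d_exp|].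
        apply (is_derive_scal (fun s => s) s C 1). apply d_id. ring. unfold opp; simpl. ring.
      - assert (Hd := Rle_abs (- dE s)). rewrite Rabs_Ropp in Hd. assert (Hb' := Hb s).
        assert (0 < exp (C * s)) by apply exp_pos. nra. }
    unfold Phi in H. rewrite E0 in H. assert (0 < exp (C * t)) by apply exp_pos. nra.
Qed.

Lemma F_deriv a L (Qd u1 th1 : R -> R) (s : R) :
  (forall y, is_derive (QL a L) y (Qd y)) -> (forall y, DL a L y -> Qd y = QL a L y * SL 1 a L y) ->
  is_derive u1 s (2 * sqrt (QL a L (u1 s)) * cos (th1 s)) ->
  is_derive th1 s (- sqrt (QL a L (u1 s)) * sin (th1 s) * SL 1 a L (u1 s)) -> DL a L (u1 s) ->
  is_derive (fun t => sqrt (QL a L (u1 t)) * sin (th1 t)) s 0 /\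
  is_derive (fun t => sqrt (QL a L (u1 t)) * cos (th1 t)) s (Qd (u1 s)).
Proof.
  intros DQ EQd Du Dth Ds.
  assert (Qp : 0 < QL a L (u1 s)) by (apply QL_pos; auto).
  assert (r0 : 0 < sqrt (QL a L (u1 s))) by (apply sqrt_lt_R0; auto).
  assert (rr : sqrt (QL a L (u1 s)) * sqrt (QL a L (u1 s)) = QL a L (u1 s)) by (apply sqrt_sqrt; lra).
  assert (Dsq : is_derive (fun t => sqrt (QL a L (u1 t))) s
      ((2 * sqrt (QL a L (u1 s)) * cos (th1 s)) * Qd (u1 s) / (2 * sqrt (QL a L (u1 s))))).
  { apply (is_derive_sqrt (fun t => QL a L (u1 t))); auto.
    apply (d_comp (QL a L) u1); auto. }
  assert (EQ := EQd (u1 s) Ds).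
  split.
  - eapply d_eq. apply (d_mult (fun t => sqrt (QL a L (u1 t))) (fun t => sin (th1 t))); [exact Dsq|].
    apply (d_comp sin th1); [apply d_sin| exact Dth].
    rewrite EQ. field_simplify; [|lra]. rewrite pow2_sqrt by lra. ring.
  - eapply d_eq. apply (d_mult (fun t => sqrt (QL a L (u1 t))) (fun t => cos (th1 t))); [exact Dsq|].
    apply (d_comp cos th1); [apply d_cos| exact Dth].
    rewrite EQ. assert (SC := sin2_cos2 (th1 s)). unfold Rsqr in SC.
    field_simplify; [|lra]. rewrite pow2_sqrt by lra.
    transitivity (QL a L (u1 s) * SL 1 a L (u1 s) * (sin (th1 s) * sin (th1 s) + cos (th1 s) * cos (th1 s))).
    field; lra. rewrite SC; ring.
Qed.

Lemma cont_nbhd (f : R -> R) (t : R) (P : R -> Prop) : continuity_pt f t ->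
  (exists r, 0 < r /\ forall y, Rabs (y - f t) < r -> P y) ->
  exists d, 0 < d /\ forall s, Rabs (s - t) < d -> P (f s).
Proof.
  intros Hc [r [Hr HP]]. destruct (Hc r Hr) as [d [Hd Hd2]].
  exists d. split; auto. intros s Hs. apply HP.
  destruct (Req_dec s t) as [->|Hne]. rewrite Rminus_diag, Rabs_R0; auto.
  apply (Hd2 s). split; [split; [constructor| auto]| exact Hs].
Qed.

Lemma uniq a L (Qd : R -> R) (p q A u0 th0 ps0 : R) (u w th ps u1 th1 ps1 : R -> R) :
  (forall y, is_derive (QL a L) y (Qd y)) -> poly Qd -> (forall y, DL a L y -> Qd y = QL a L y * SL 1 a L y) ->
  (forall x, DL a L x -> A ^ 2 <= QL a L x -> p <= x <= q) -> 0 < A -> p < q ->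
  (forall t, is_derive u t (2 * w t) /\ is_derive w t (Qd (u t)) /\ p < u t < q) ->
  (forall t, is_derive th t (- A * SL 1 a L (u t))) -> (forall t, is_derive ps t (- A * SL 2 a L (u t))) ->
  u 0 = u0 -> w 0 = sqrt (QL a L u0) * cos th0 -> th 0 = th0 -> ps 0 = ps0 -> DL a L u0 ->
  sqrt (QL a L u0) * sin th0 = A ->
  (forall t, is_derive u1 t (2 * sqrt (QL a L (u1 t)) * cos (th1 t)) /\
     is_derive th1 t (- sqrt (QL a L (u1 t)) * sin (th1 t) * SL 1 a L (u1 t)) /\
     is_derive ps1 t (- sqrt (QL a L (u1 t)) * sin (th1 t) * SL 2 a L (u1 t))) ->
  u1 0 = u0 -> th1 0 = th0 -> ps1 0 = ps0 ->
  forall t, u1 t = u t /\ th1 t = th t /\ ps1 t = ps t.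
Proof.
  intros DQ PQd EQd Htrap HA Hpq Hsol Dth Dps Hu0 Hw0 Hth0 Hps0 Du0 HA0 Hsol1 Hu10 Hth10 Hps10.
  set (F := fun t => sqrt (QL a L (u1 t)) * sin (th1 t)).
  assert (FD : forall s, DL a L (u1 s) -> is_derive F s 0).
  { intros s Ds. destruct (Hsol1 s) as [D1 [D2 _]]. apply (proj1 (F_deriv a L Qd u1 th1 s DQ EQd D1 D2 Ds)). }
  assert (F0 : F 0 = A) by (unfold F; rewrite Hu10, Hth10; auto).
  assert (Fconst : forall x z, x <= z -> (forall s, x <= s <= z -> DL a L (u1 s)) -> F x = F z).
  { intros x z Hxz H. apply const_interval; auto. }
  assert (cu1 : forall s, continuity_pt u1 s) by (intros s; apply (deriv_cont _ _ _ (proj1 (Hsol1 s)))).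
  assert (FQ : forall s, DL a L (u1 s) -> F s = A -> A ^ 2 <= QL a L (u1 s)).
  { intros s Ds Fs. assert (Qp : 0 < QL a L (u1 s)) by (apply QL_pos; auto).
    assert (r0 : 0 <= sqrt (QL a L (u1 s))) by apply sqrt_pos.
    assert (rr : sqrt (QL a L (u1 s)) ^ 2 = QL a L (u1 s)) by (apply pow2_sqrt; lra).
    assert (Hs := SIN_bound (th1 s)). unfold F in Fs.
    assert (A <= sqrt (QL a L (u1 s))) by nra. nra. }
  assert (Closed : forall t0, (forall d, 0 < d -> exists s, Rabs (s - t0) < d /\ DL a L (u1 s) /\ F s = A) ->
     DL a L (u1 t0)).
  { intros t0 H.
    assert (QA : A ^ 2 <= QL a L (u1 t0)).
    { apply (lim_ge (fun s => QL a L (u1 s))).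
      - apply (cont_comp (QL a L) u1); auto. apply poly_cont, QL_poly.
      - intros d Hd. destruct (H d Hd) as [s [Hs [Ds Fs]]]. exists s. split; auto. }
    intros j Hj.
    assert (G0 : 0 <= IZR (a j) * u1 t0 + 1).
    { apply (lim_ge (fun s => IZR (a j) * u1 s + 1) t0 0).
      - apply (cont_comp (fun x => IZR (a j) * x + 1) u1); auto. apply poly_cont.
        apply poly_add; [apply poly_mul; constructor| constructor].
      - intros d Hd. destruct (H d Hd) as [s [Hs [Ds Fs]]]. exists s. split; auto.
        left; apply Ds; auto. }
    destruct G0 as [|G0]; auto.
    assert (QL a L (u1 t0) = 0) by (apply (QL_zero a L j); auto). nra. }
  assert (Open : forall t, DL a L (u1 t) -> exists d, 0 < d /\ forall s, Rabs (s - t) < d -> DL a L (u1 s)).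
  { intros t Dt. apply cont_nbhd; auto. destruct (DL_open a L (u1 t) Dt) as [r [Hr Hr2]]. exists r; auto. }
  assert (Fwd : forall t, 0 <= t -> DL a L (u1 t)).
  { apply cont_ind.
    - intros t Ht H. destruct (Req_dec t 0) as [->|Hne]; [rewrite Hu10; auto|].
      apply Closed. intros d Hd. assert (Hm1 := Rmin_l d t). assert (Hm2 := Rmin_r d t).
      assert (Hm3 : 0 < Rmin d t) by (apply Rmin_glb_lt; lra).
      exists (t - Rmin d t / 2). split; [rewrite Rabs_left; lra|]. split; [apply H; lra|].
      rewrite <- F0. symmetry. apply Fconst; [lra|]. intros; apply H; lra.
    - intros t Ht Dt. destruct (Open t Dt) as [d [Hd Hd2]]. exists d. split; auto.
      intros s Hs. apply Hd2. rewrite Rabs_pos_eq; lra. }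
  assert (Bwd : forall t, 0 <= t -> DL a L (u1 (- t))).
  { apply (cont_ind (fun t => DL a L (u1 (- t)))).
    - intros t Ht H. destruct (Req_dec t 0) as [->|Hne]; [rewrite Ropp_0, Hu10; auto|].
      apply Closed. intros d Hd. assert (Hm1 := Rmin_l d t). assert (Hm2 := Rmin_r d t).
      assert (Hm3 : 0 < Rmin d t) by (apply Rmin_glb_lt; lra).
      exists (- t + Rmin d t / 2). split; [rewrite Rabs_pos_eq; lra|].
      assert (HH : forall r, - t < r <= 0 -> DL a L (u1 r)).
      { intros r Hr. replace r with (- (- r)) by ring. apply H; lra. }
      split; [apply HH; lra|].
      rewrite <- F0. apply Fconst; [lra|]. intros; apply HH; lra.
    - intros t Ht Dt. destruct (Open (- t) Dt) as [d [Hd Hd2]]. exists d. split; auto.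
      intros s Hs. apply Hd2. rewrite Rabs_left1; lra. }
  assert (Dall : forall t, DL a L (u1 t)).
  { intros t. destruct (Rle_dec 0 t); [apply Fwd; auto|]. replace t with (- (- t)) by ring. apply Bwd; lra. }
  assert (FA : forall t, F t = A).
  { intros t. rewrite <- F0. destruct (Rle_dec 0 t).
    - symmetry; apply Fconst; auto.
    - apply Fconst; [lra| auto]. }
  set (w1 := fun t => sqrt (QL a L (u1 t)) * cos (th1 t)).
  assert (Dw1 : forall t, is_derive w1 t (Qd (u1 t))).
  { intros t. destruct (Hsol1 t) as [D1 [D2 _]]. apply (F_deriv a L Qd u1 th1 t); auto. }
  assert (Du1 : forall t, is_derive u1 t (2 * w1 t)).
  { intros t. eapply d_eq. apply (Hsol1 t). unfold w1. ring. }
  assert (Hin1 : forall t, p <= u1 t <= q) by (intros t; apply Htrap; auto).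
  destruct (poly_deriv Qd PQd) as [Qdd [PQdd DQd]].
  destruct (continuity_ab_maj (fun x => Rabs (Qdd x)) p q ltac:(lra)) as [xM [HM _]].
  { intros x _. apply (cont_comp Rabs Qdd). apply poly_cont; auto. apply Rcontinuity_abs. }
  set (M := Rabs (Qdd xM)).
  assert (HM0 : 0 <= M) by apply Rabs_pos.
  assert (Lip : forall x y, p <= x <= q -> p <= y <= q -> Rabs (Qd x - Qd y) <= M * Rabs (x - y)).
  { intros x y Hx Hy. destruct (Rtotal_order y x) as [Hlt|[Heq|Hgt]].
    - destruct (mvt_closed Qd Qdd y x Hlt) as [z [Hz E]]; [intros; apply DQd|].
      rewrite E, Rabs_mult. apply Rmult_le_compat_r; [apply Rabs_pos|]. apply HM; lra.
    - subst. rewrite !Rminus_diag, !Rabs_R0. lra.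
    - destruct (mvt_closed Qd Qdd x y Hgt) as [z [Hz E]]; [intros; apply DQd|].
      rewrite <- Rabs_Ropp. rewrite <- (Rabs_Ropp (x - y)).
      replace (- (Qd x - Qd y)) with (Qd y - Qd x) by ring. replace (- (x - y)) with (y - x) by ring.
      rewrite E, Rabs_mult. apply Rmult_le_compat_r; [apply Rabs_pos|]. apply HM; lra. }
  set (E := fun t => (u1 t - u t) ^ 2 + (w1 t - w t) ^ 2).
  set (dE := fun t => 2 * (u1 t - u t) * (2 * w1 t - 2 * w t) + 2 * (w1 t - w t) * (Qd (u1 t) - Qd (u t))).
  assert (E0 : forall t, E t = 0).
  { apply (gronwall E dE (2 + M)).
    - intros t. unfold E, dE. destruct (Hsol t) as [Du [Dw _]].
      apply d_plus.
      + apply (d_sq (fun s => u1 s - u s)). apply d_sub; auto.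
      + apply (d_sq (fun s => w1 s - w s)). apply d_sub; auto.
    - intros t. unfold E. apply Rplus_le_le_0_compat; apply pow2_ge_0.
    - intros t. unfold dE, E.
      assert (Hl := Lip (u1 t) (u t) (Hin1 t) ltac:(destruct (Hsol t) as [_ [_ H]]; lra)).
      set (d := u1 t - u t) in *. set (e := w1 t - w t) in *. set (L0 := Qd (u1 t) - Qd (u t)) in *.
      replace (2 * d * (2 * w1 t - 2 * w t)) with (4 * d * e) by (unfold e; ring).
      assert (T1 : Rabs (4 * d * e + 2 * e * L0) <= 4 * Rabs d * Rabs e + 2 * Rabs e * Rabs L0).
      { eapply Rle_trans; [apply Rabs_triang|]. rewrite !Rabs_mult.
        rewrite (Rabs_pos_eq 4) by lra. rewrite (Rabs_pos_eq 2) by lra. lra. }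
      assert (Ad := Rabs_pos d). assert (Ae := Rabs_pos e).
      assert (Sd : Rabs d ^ 2 = d ^ 2) by apply pow2_abs.
      assert (Se : Rabs e ^ 2 = e ^ 2) by apply pow2_abs.
      assert (2 * Rabs e * Rabs L0 <= 2 * Rabs e * (M * Rabs d)) by (apply Rmult_le_compat_l; nra).
      assert (Hsq : 0 <= (Rabs d - Rabs e) ^ 2) by apply pow2_ge_0.
      assert (Hde : 2 * Rabs d * Rabs e <= d ^ 2 + e ^ 2) by (rewrite <- Sd, <- Se; nra).
      assert ((2 + M) * (2 * Rabs d * Rabs e) <= (2 + M) * (d ^ 2 + e ^ 2)) by (apply Rmult_le_compat_l; lra).
      lra.
    - unfold E. rewrite Hu10, Hu0. unfold w1. rewrite Hu10, Hth10, Hw0. ring. }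
  assert (Uw : forall t, u1 t = u t /\ w1 t = w t).
  { intros t. assert (H := E0 t). unfold E in H.
    pose proof (pow2_ge_0 (u1 t - u t)). pose proof (pow2_ge_0 (w1 t - w t)).
    assert (K1 : (u1 t - u t) ^ 2 = 0) by lra. assert (K2 : (w1 t - w t) ^ 2 = 0) by lra.
    rewrite <- Rsqr_pow2 in K1, K2. apply Rsqr_0_uniq in K1. apply Rsqr_0_uniq in K2. split; lra. }
  assert (Hth : forall t, th1 t = th t).
  { intros t. assert (Hc : forall s, is_derive (fun s => th1 s - th s) s 0).
    { intros s. eapply d_eq. apply d_sub; [apply (Hsol1 s)| apply Dth].
      assert (Fs := FA s). unfold F in Fs. destruct (Uw s) as [Eu _]. rewrite Eu in Fs |- *.
      replace (- sqrt (QL a L (u s)) * sin (th1 s) * SL 1 a L (u s)) with (- (sqrt (QL a L (u s)) * sin (th1 s)) * SL 1 a L (u s)) by ring.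
      rewrite Fs. ring. }
    assert (X := const_global _ Hc t 0). cbv beta in X. rewrite Hth10, Hth0 in X. lra. }
  assert (Hps : forall t, ps1 t = ps t).
  { intros t. assert (Hc : forall s, is_derive (fun s => ps1 s - ps s) s 0).
    { intros s. eapply d_eq. apply d_sub; [apply (Hsol1 s)| apply Dps].
      assert (Fs := FA s). unfold F in Fs. destruct (Uw s) as [Eu _]. rewrite Eu in Fs |- *.
      replace (- sqrt (QL a L (u s)) * sin (th1 s) * SL 2 a L (u s)) with (- (sqrt (QL a L (u s)) * sin (th1 s)) * SL 2 a L (u s)) by ring.
      rewrite Fs. ring. }
    assert (X := const_global _ Hc t 0). cbv beta in X. rewrite Hps10, Hps0 in X. lra. }
  intros t. split; [apply Uw| split; auto].
Qed.

Theorem proposition7p11 (m : nat) (a : nat -> Z) (u0 th0 ps0 : R) :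
  standing a m ->
  (forall j, (j < m)%nat -> IZR (a j) * u0 + 1 > 0) ->
  0 < sqrt (Q a m u0) * sin th0 < 1 ->
  exists u th ps : R -> R,
    solves a m u th ps /\ u 0 = u0 /\ th 0 = th0 /\ ps 0 = ps0 /\
    (forall u' th' ps' : R -> R,
        solves a m u' th' ps' -> u' 0 = u0 -> th' 0 = th0 -> ps' 0 = ps0 ->
        forall t, u' t = u t /\ th' t = th t /\ ps' t = ps t) /\
    (exists t1 t2, u t1 <> u t2) /\
    (exists t1 t2, th t1 <> th t2) /\
    exists T, 0 < T /\
      (forall t, u (t + T) = u t /\ th (t + T) = th t) /\
      exists Psi, 0 < Psi /\ forall t, ps (t + T) = ps t - Psi.
Proof.
  intros Hst HD0 HA.
  destruct Hst as [Hm [_ [Hnz [_ Hsum]]]].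
  set (L := seq 0 m).
  change (Q a m) with (QL a L) in *.
  unfold solves. change (Q a m) with (QL a L). change (S 1 a m) with (SL 1 a L). change (S 2 a m) with (SL 2 a L).
  assert (Hnz' : exists j, In j L /\ a j <> 0%Z).
  { destruct Hnz as [j [Hj Hj2]]. exists j. split; auto. apply in_seq. lia. }
  destruct (sign_exists a L Hsum Hnz') as [Hpos Hneg].
  assert (Du0 : DL a L u0) by (intros j Hj; apply in_seq in Hj; apply HD0; lia).
  set (A := sqrt (QL a L u0) * sin th0) in *.
  assert (Qu0 : 0 < QL a L u0) by (apply QL_pos; auto).
  assert (r0 : 0 < sqrt (QL a L u0)) by (apply sqrt_lt_R0; auto).
  assert (rr0 : sqrt (QL a L u0) ^ 2 = QL a L u0) by (apply pow2_sqrt; lra).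
  set (w0 := sqrt (QL a L u0) * cos th0).
  assert (Hw0 : w0 ^ 2 + A ^ 2 = QL a L u0).
  { unfold w0, A. assert (SC := sin2_cos2 th0). unfold Rsqr in SC.
    transitivity (sqrt (QL a L u0) ^ 2 * (sin th0 * sin th0 + cos th0 * cos th0)); [ring|].
    rewrite SC, rr0. ring. }
  destruct (construct a L u0 A w0 Hpos Hneg Hnz' Du0 HA Hw0) as
    [p [q [Qd [Hpq [DQ [PQd [EQd [HDpq [Htrap [u [w [P [HP [Hsol [Hu0 [Hw00 [Hnu Hnw]]]]]]]]]]]]]]]]].
  assert (HA0 : 0 < A) by lra.
  set (th := fun t => th0 + atan (w0 / A) - atan (w t / A)).
  set (ps := fun t => ps0 + RInt (fun s => - A * SL 2 a L (u s)) 0 t).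
  assert (Du : forall t, DL a L (u t)) by (intros t; apply HDpq; destruct (Hsol t) as [_ [_ [H _]]]; lra).
  assert (Qut : forall t, QL a L (u t) = A ^ 2 + w t ^ 2) by (intros t; apply (Hsol t)).
  assert (Trig : forall t, cos (th t) = w t / sqrt (QL a L (u t)) /\ sin (th t) = A / sqrt (QL a L (u t))).
  { intros t. rewrite Qut. destruct (atan_eq A (w t) HA0) as [C1 S1].
    destruct (atan_eq A w0 HA0) as [C0 S0].
    replace (A ^ 2 + w0 ^ 2) with (QL a L u0) in C0, S0 by lra.
    destruct (trig_shift th0 (atan (w0 / A)) (atan (w t / A))) as [T1 T2].
    - rewrite C0. unfold A. field. lra.
    - rewrite S0. unfold w0. field. lra.
    - unfold th. rewrite T1, T2, C1, S1. split; reflexivity. }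
  assert (sq : forall t, 0 < sqrt (QL a L (u t))) by (intros t; apply sqrt_lt_R0, QL_pos, Du).
  assert (Dth : forall t, is_derive th t (- A * SL 1 a L (u t))).
  { intros t. destruct (Hsol t) as [_ [Dw _]].
    unfold th. eapply d_eq.
    - apply (d_sub (fun _ => th0 + atan (w0 / A)) (fun t => atan (w t / A))); [apply d_const|].
      apply (d_comp atan (fun t => w t / A)).
      + apply is_derive_Reals, derivable_pt_lim_atan.
      + apply (d_ext (fun t => / A * w t)); [intros; unfold Rdiv; ring|].
        apply is_derive_scal. exact Dw.
    - rewrite EQd by auto. assert (E := Qut t).
      assert (Qp : QL a L (u t) > 0) by (apply QL_pos; auto).
      replace (1 + (w t / A) ^ 2) with (QL a L (u t) / A ^ 2) by (rewrite E; field; lra).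
      field. lra. }
  assert (Cs2 : forall s, continuity_pt (fun s => - A * SL 2 a L (u s)) s).
  { intros s. apply (cont_comp (fun x => - A * SL 2 a L x) u).
    - apply (deriv_cont _ _ _ (proj1 (Hsol s))).
    - destruct (SL_deriv 2 a L (u s) (Du s)) as [d D].
      apply (deriv_cont _ _ (- A * d)). apply is_derive_scal. exact D. }
  assert (Dps : forall t, is_derive ps t (- A * SL 2 a L (u t))).
  { intros t. unfold ps. eapply d_eq.
    - apply (d_plus (fun _ => ps0) (fun t => RInt (fun s => - A * SL 2 a L (u s)) 0 t)); [apply d_const|].
      apply (is_derive_RInt (fun s => - A * SL 2 a L (u s)) (fun t => RInt (fun s => - A * SL 2 a L (u s)) 0 t) 0 t).
      + apply filter_forall. intros x. apply (RInt_correct (fun s => - A * SL 2 a L (u s)) 0 x).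
        apply (ex_RInt_continuous (fun s => - A * SL 2 a L (u s))). intros; apply continuity_pt_filterlim, Cs2.
      + apply continuity_pt_filterlim, Cs2.
    - ring. }
  assert (th00 : th 0 = th0) by (unfold th; rewrite Hw00; ring).
  assert (ps00 : ps 0 = ps0) by (unfold ps; rewrite RInt_point; unfold zero; simpl; ring).
  exists u, th, ps. split; [|split; [auto|split; [auto|split; [auto|split; [|split; [auto|split]]]]]].
  - intros t. destruct (Trig t) as [Ct St]. destruct (Hsol t) as [Du1 _]. split; [|split].
    + eapply d_eq; [exact Du1|]. rewrite Ct. field. assert (X := sq t). lra.
    + eapply d_eq; [apply Dth|]. rewrite St. field. assert (X := sq t). lra.
    + eapply d_eq; [apply Dps|]. rewrite St. field. assert (X := sq t). lra.
  - intros u' th' ps' Hs' Hu' Hth' Hps'.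
    apply (uniq a L Qd p q A u0 th0 ps0 u w th ps u' th' ps'); auto; try lra.
    + intros t; destruct (Hsol t) as [X1 [X2 [X3 _]]]; auto.
  - destruct Hnw as [t1 [t2 Hne]]. exists t1, t2. unfold th. intro E.
    assert (atan (w t1 / A) = atan (w t2 / A)) by lra.
    destruct (Rtotal_order (w t1 / A) (w t2 / A)) as [Hlt|[Heq|Hgt]].
    + assert (atan (w t1 / A) < atan (w t2 / A)) by (apply atan_increasing; auto). lra.
    + apply Hne. apply Rmult_eq_reg_r with (/ A). exact Heq. apply Rinv_neq_0_compat; lra.
    + assert (atan (w t2 / A) < atan (w t1 / A)) by (apply atan_increasing; auto). lra.
  - exists P. split; auto. split.
    + intros t. destruct (Hsol t) as [_ [_ [_ [_ [E1 E2]]]]]. split; auto. unfold th. rewrite E2. reflexivity.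
    + exists (ps 0 - ps P). split.
      * assert (X : - ps 0 < - ps P); [|lra].
        apply (incr_strict (fun t => - ps t) (fun t => A * SL 2 a L (u t)) 0 P); try lra.
        intros t Ht. split.
        -- eapply d_eq. apply (is_derive_opp ps). apply Dps. unfold opp; simpl. ring.
        -- apply Rmult_lt_0_compat; auto. apply SL2_pos; auto.
      * intros t. assert (Hc : forall s, is_derive (fun s => ps (s + P) - ps s) s 0).
        { intros s. eapply d_eq. apply d_sub; [|apply Dps].
          apply (d_comp ps (fun s => s + P)); [apply Dps| apply d_addc].
          destruct (Hsol s) as [_ [_ [_ [_ [E1 E2]]]]]. rewrite E1. ring. }
        assert (X := const_global _ Hc t 0). cbv beta in X. rewrite Rplus_0_l in X. lra.
Qed.
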